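(* Let $q$ be prime, $N \leq \frac{q}{\log^2 q}$, $H = \sqrt{Nq}\log q$ and $x = \frac{1}{2\log q}\sqrt{\frac{q}{N}}$. For a Dirichlet character $\chi$ modulo $q$ set \[S(\chi) = \sum_{\substack{|h| \leq H\\ h \neq 0}} \frac{\chi(h)}{h}\left(1 - \cos\!\left(\frac{2\pi h}{N}\right)\right).\] Let $r$ be a non-negative multiplicative function supported on squarefree numbers not divisible by $q$. Then \[\sup_{\chi \neq \chi_0} |S(\chi)|^2 \gg \frac{1}{N} \sum_{\substack{m_1, m_2 \leq \min(x, N/2) \\ (m_1,m_2) = 1}} \frac{r(m_1)r(m_2)\, m_1m_2}{\max(m_1,m_2)^3} \sum_{\substack{g \leq x/\max(m_1,m_2)\\ (g,m_1m_2) = 1}} r(g)^2 \Bigg/ \prod_p \left(1 + r(p)^2\right),\] where the supremum is over non-principal characters modulo $q$, the product is over primes, and the implied constant is absolute. *)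

(* Defs.v *)
From Stdlib Require Import Reals Lra Lia ZArith Znumtheory List.
From Coquelicot Require Import Coquelicot.
From Stdlib Require Import Bool.
Open Scope R_scope.

Definition sumR {A : Type} (l : list A) (f : A -> R) : R :=
  fold_right Rplus 0 (map f l).
Definition sumC {A : Type} (l : list A) (f : A -> C) : C :=
  fold_right Cplus (RtoC 0) (map f l).

Definition Rleb (a b : R) : bool := if Rle_dec a b then true else false.

Definition Zrange_abs_le (H : R) : list Z :=
  let K := up (Rabs H) in
  filter (fun h => andb (Rleb (Rabs (IZR h)) H) (negb (Z.eqb h 0)))
    (map (fun k => (k - K)%Z) (map Z.of_nat (seq 0 (Z.to_nat (2 * K + 1))))).

Definition Nrange_le (B : R) : list nat :=
  filter (fun n => Rleb (INR n) B) (seq 1 (Z.to_nat (up (Rabs B)))).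

Definition dirichlet_char (q : Z) (chi : Z -> C) : Prop :=
  chi 1%Z = RtoC 1 /\
  (forall m n : Z, chi (m * n)%Z = Cmult (chi m) (chi n)) /\
  (forall n : Z, chi (n + q)%Z = chi n) /\
  (forall n : Z, Z.gcd n q <> 1%Z -> chi n = RtoC 0).

Definition principal_char (q : Z) (n : Z) : C :=
  if Z.eqb (Z.gcd n q) 1 then RtoC 1 else RtoC 0.

Definition non_principal (q : Z) (chi : Z -> C) : Prop :=
  exists n : Z, chi n <> principal_char q n.

Definition Hpar (q N : nat) : R := sqrt (INR N * INR q) * ln (INR q).
Definition xpar (q N : nat) : R := / (2 * ln (INR q)) * sqrt (INR q / INR N).

Definition Schi (q N : nat) (chi : Z -> C) : C :=
  sumC (Zrange_abs_le (Hpar q N))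
    (fun h => Cmult (Cdiv (chi h) (RtoC (IZR h)))
                    (RtoC (1 - cos (2 * PI * IZR h / INR N)))).

Definition is_prime_nat (p : nat) : Prop := prime (Z.of_nat p).
Definition squarefree (n : nat) : Prop :=
  forall d : nat, Nat.divide (d * d) n -> d = 1%nat.

Definition multiplicative (r : nat -> R) : Prop :=
  r 1%nat = 1 /\
  (forall m n : nat, Nat.gcd m n = 1%nat -> r (m * n)%nat = r m * r n).

Definition prime_partial_prod (r : nat -> R) (P : nat) : R :=
  fold_right Rmult 1
    (map (fun p => if prime_dec (Z.of_nat p) then 1 + r p ^ 2 else 1)
         (seq 1 P)).

(* the double sum on the right-hand side (without the factor 1/N
   and without the division by the Euler product) *)
Definition RHS_sum (q N : nat) (r : nat -> R) : R :=
  let x := xpar q N in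
  let B := Rmin x (INR N / 2) in
  sumR (Nrange_le B) (fun m1 =>
  sumR (Nrange_le B) (fun m2 =>
    if Nat.eqb (Nat.gcd m1 m2) 1 then
      let M := INR (Nat.max m1 m2) in
      r m1 * r m2 * INR m1 * INR m2 / M ^ 3 *
      sumR (Nrange_le (x / M)) (fun g =>
        if Nat.eqb (Nat.gcd g (m1 * m2)) 1 then r g ^ 2 else 0)
    else 0)).

(* Main.v *)
Require Import Defs.
From Stdlib Require Import Reals ZArith Znumtheory Lra Lia List Bool.
From Coquelicot Require Import Coquelicot.
Module PRM.
From mathcomp Require Import all_boot all_algebra all_solvable all_field zify.
Set Implicit Arguments. Unset Strict Implicit.
Import GRing.Theory.
Local Open Scope ring_scope.
Lemma Fp_eq_nat (p : nat) (pr : prime p) (a b : nat) :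
  ((a%:R : 'F_p) == b%:R) = (a == b %[mod p])%N.
Proof.
apply/eqP/eqP => [H|H].
- by rewrite -(val_Fp_nat pr) H (val_Fp_nat pr).
- by apply: val_inj; rewrite /= !(val_Fp_nat pr).
Qed.

Lemma Fp_fermat (p : nat) (pr : prime p) (x : 'F_p) : x != 0 -> x ^+ p.-1 = 1.
Proof.
move=> nz.
have e : x ^+ #|'F_p| = x := expf_card x.
have e2 : x ^+ p = x by move: e; rewrite card_Fp.
have p_gt1 := prime_gt1 pr.
have e3 : x ^+ (p.-1).+1 = x by rewrite (prednK (ltnW p_gt1)).
move: e3; rewrite exprS.
move=> h; apply: (mulfI nz); rewrite mulr1; exact: h.
Qed.

Lemma prim_root_nat (p : nat) : prime p -> exists g : nat,
 (forall i j, (g^i == g^j %[mod p]) = (i == j %[mod p.-1]))%N /\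
 (forall a, ~~ (p %| a)%N -> exists i, (i < p.-1)%N /\ (g^i = a %[mod p])%N) /\
 (odd p -> (p %| g^(p.-1./2) + 1)%N).
Proof.
move=> pr.
have p_gt1 := prime_gt1 pr.
have n_gt0 : (0 < p.-1)%N by rewrite -ltnS prednK ?(ltnW p_gt1).
pose rs := [seq x <- enum 'F_p | x != 0].
have hall : all (p.-1).-unity_root rs.
  apply/allP => x; rewrite mem_filter => /andP [nz _].
  by rewrite unity_rootE (Fp_fermat pr nz).
have hu : uniq rs by apply: filter_uniq; exact: enum_uniq.
have hs : (p.-1 <= size rs)%N.
  rewrite size_filter.
  have := count_predC (fun x : 'F_p => x != 0) (enum 'F_p).
  rewrite -cardE card_Fp //.
  have -> : count (predC (fun x : 'F_p => x != 0)) (enum 'F_p) = 1%N.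
    rewrite -(@eq_count _ (pred1 0)); last by move=> y /=; rewrite negbK.
    by rewrite count_uniq_mem ?enum_uniq // mem_enum.
  move=> h; apply: eq_leq. rewrite addn1 in h. have := f_equal predn h. simpl. move=> ->. by [].
have := has_prim_root n_gt0 hall hu hs.
case/hasP => z _ zprim.
exists (val z).
have hz : ((val z)%:R : 'F_p) = z.
  apply: val_inj => /=; rewrite (val_Fp_nat pr) modn_small //.
  apply: leq_trans (ltn_ord z) _. by rewrite (Fp_cast pr).
split; [|split].
- move=> i j; rewrite -Fp_eq_nat // !natrX hz.
  exact: eq_prim_root_expr.
- move=> a na.
  have anz : (a%:R : 'F_p) != 0.
    apply/negP; rewrite -(mulr0n 1) Fp_eq_nat // mod0n => h.
    by move: na; rewrite /dvdn h.
  case/(prim_rootP zprim): (Fp_fermat pr anz) => i hi.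
  exists i; split; first exact: ltn_ord.
  by apply/eqP; rewrite -Fp_eq_nat // natrX hz -hi.
- move=> op.
  have hQ : (p.-1./2 * 2 = p.-1)%N.
    rewrite muln2 -{2}(odd_double_half p.-1).
    suff -> : odd p.-1 = false by [].
    by move: op; rewrite -{1}(prednK (ltnW p_gt1)) /= => /negbTE.
  move: hQ. set Q := p.-1./2 => hQ.
  have w2 : (z ^+ Q) ^+ 2 == 1.
    by rewrite -exprM hQ (prim_expr_order zprim).
  rewrite sqrf_eq1 in w2.
  case/orP: w2 => [w1|wm].
  + exfalso.
    move: w1; rewrite -(expr0 z) (eq_prim_root_expr zprim) mod0n.
    rewrite modn_small; last by lia.
    move/eqP => Q0. rewrite Q0 in hQ. lia.
  + have : ((val z ^ Q + 1)%:R : 'F_p) == 0.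
      by rewrite natrD natrX hz (eqP wm) addNr.
    rewrite -(mulr0n 1) Fp_eq_nat // mod0n.
    by move/eqP => h; rewrite /dvdn h.
Qed.

Lemma pow_expn (m n : nat) : Nat.pow m n = expn m n.
Proof. elim: n => [|n IH] //=. by rewrite expnS IH. Qed.

Lemma mod_modn (m d : nat) : (0 < d)%N -> Nat.modulo m d = modn m d.
Proof.
move=> hd. symmetry. apply: (Nat.mod_unique m d (m %/ d)).
- apply/ltP. by rewrite ltn_mod.
- rewrite {1}(divn_eq m d). by rewrite mulnC.
Qed.

Lemma prime_bridge (q : nat) : Znumtheory.prime (Z.of_nat q) -> prime q.
Proof.
move=> hp. apply/primeP. split.
- have := Znumtheory.prime_ge_2 _ hp. move=> h. apply/ltP. lia.
- move=> d /dvdnP [k hk].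
  have hz : (Z.of_nat d | Z.of_nat q)%Z.
    exists (Z.of_nat k). rewrite hk. rewrite -Nat2Z.inj_mul. done.
  case: (Znumtheory.prime_divisors _ hp _ hz) => [h|[h|[h|h]]]; lia.
Qed.

Lemma prim_root_std (q : nat) : Znumtheory.prime (Z.of_nat q) -> exists g : nat,
 (forall i j, Nat.modulo (Nat.pow g i) q = Nat.modulo (Nat.pow g j) q <->
              Nat.modulo i (Nat.sub q 1) = Nat.modulo j (Nat.sub q 1)) /\
 (forall a, Nat.modulo a q <> 0%nat -> exists i, lt i (Nat.sub q 1) /\
              Nat.modulo (Nat.pow g i) q = Nat.modulo a q) /\
 (Nat.odd q = true -> Nat.modulo (Nat.add (Nat.pow g (Nat.div (Nat.sub q 1) 2)) 1) q = 0%nat).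
Proof.
move=> hp. have pr := prime_bridge hp.
have p_gt1 := prime_gt1 pr.
have q0 : (0 < q)%N by apply: ltnW.
have q10 : (0 < q - 1)%N by rewrite subn_gt0.
case: (prim_root_nat pr) => g [H1 [H2 H3]].
exists g. rewrite -!subn1 in H1 H2 H3 *.
split; [|split].
- move=> i j. rewrite !pow_expn !mod_modn //.
  have h := H1 i j. split => e.
  + apply/eqP; rewrite -h; by apply/eqP.
  + apply/eqP; rewrite h; by apply/eqP.
- move=> a ha. rewrite mod_modn // in ha.
  have na : ~~ (q %| a)%N by rewrite /dvdn; apply/eqP.
  case: (H2 a na) => i [hi e]. exists i. split; first by apply/ltP.
  by rewrite pow_expn !mod_modn.
- move=> od.
  have od' : odd q.
    have e : forall n, Nat.odd n = odd n.
      elim => [|n IH] //. rewrite Nat.odd_succ -Nat.negb_odd IH /=. done.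
    by rewrite -e.
  have hd : Nat.div (q-1) 2 = (q-1)./2.
    symmetry. apply: (Nat.div_unique _ _ _ (odd (q-1))).
    + case: (odd _); apply/ltP; done.
    + rewrite {1}(esym (odd_double_half (q-1))) -muln2. rewrite multE plusE. lia.
  rewrite mod_modn // pow_expn hd. apply/eqP. exact: H3 od'.
Qed.
End PRM.


Import ListNotations.
Open Scope R_scope.

Lemma sumR_nil {A} (f : A -> R) : sumR [] f = 0.
Proof. reflexivity. Qed.
Lemma sumR_cons {A} (a : A) l f : sumR (a :: l) f = f a + sumR l f.
Proof. reflexivity. Qed.
Lemma sumR_app {A} (l1 l2 : list A) f : sumR (l1 ++ l2) f = sumR l1 f + sumR l2 f.
Proof. induction l1; simpl; [unfold sumR; simpl; lra|]. rewrite !sumR_cons, IHl1. lra. Qed.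
Lemma sumR_ext {A} (l : list A) f g : (forall x, In x l -> f x = g x) -> sumR l f = sumR l g.
Proof. induction l; intros H; [reflexivity|]. rewrite !sumR_cons, H, IHl; auto. intros; apply H; simpl; auto. simpl; auto. Qed.
Lemma sumR_le {A} (l : list A) f g : (forall x, In x l -> f x <= g x) -> sumR l f <= sumR l g.
Proof. induction l; intros H; [unfold sumR; simpl; lra|]. rewrite !sumR_cons.
  assert (f a <= g a) by (apply H; simpl; auto). assert (sumR l f <= sumR l g) by (apply IHl; intros; apply H; simpl; auto). lra. Qed.
Lemma sumR_nonneg {A} (l : list A) f : (forall x, In x l -> 0 <= f x) -> 0 <= sumR l f.
Proof. intros H. replace 0 with (sumR l (fun _ => 0)). apply sumR_le; auto.
  induction l; auto. rewrite sumR_cons, IHl. lra. intros; apply H; simpl; auto. Qed.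
Lemma sumR_scal {A} (l : list A) c f : sumR l (fun x => c * f x) = c * sumR l f.
Proof. induction l; [unfold sumR; simpl; lra|]. rewrite !sumR_cons, IHl. lra. Qed.
Lemma sumR_plus {A} (l : list A) f g : sumR l (fun x => f x + g x) = sumR l f + sumR l g.
Proof. induction l; [unfold sumR; simpl; lra|]. rewrite !sumR_cons, IHl. lra. Qed.
Lemma sumR_minus {A} (l : list A) f g : sumR l (fun x => f x - g x) = sumR l f - sumR l g.
Proof. induction l; [unfold sumR; simpl; lra|]. rewrite !sumR_cons, IHl. lra. Qed.
Lemma sumR_zero {A} (l : list A) : sumR l (fun _ => 0) = 0.
Proof. induction l; [reflexivity|]. rewrite sumR_cons, IHl; lra. Qed.
Lemma sumR_const {A} (l : list A) c : sumR l (fun _ => c) = INR (length l) * c.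
Proof. induction l; [unfold sumR; simpl; lra|]. rewrite sumR_cons, IHl. simpl length. rewrite S_INR. lra. Qed.
Lemma sumR_swap {A B} (l1 : list A) (l2 : list B) f :
  sumR l1 (fun a => sumR l2 (fun b => f a b)) = sumR l2 (fun b => sumR l1 (fun a => f a b)).
Proof. induction l1; simpl.
  - rewrite sumR_nil. symmetry. apply sumR_zero.
  - rewrite sumR_cons, IHl1. rewrite <- sumR_plus. apply sumR_ext. intros. rewrite sumR_cons. auto. Qed.
Lemma sumR_mult {A B} (l1 : list A) (l2 : list B) f g :
  sumR l1 f * sumR l2 g = sumR l1 (fun a => sumR l2 (fun b => f a * g b)).
Proof. induction l1. unfold sumR; simpl; lra.
  rewrite !sumR_cons, <- IHl1, sumR_scal. lra. Qed.
Lemma sumR_prod {A B} (l1 : list A) (l2 : list B) f :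
  sumR (list_prod l1 l2) f = sumR l1 (fun a => sumR l2 (fun b => f (a, b))).
Proof. induction l1; simpl. reflexivity.
  rewrite sumR_app, sumR_cons, IHl1. f_equal. unfold sumR. rewrite map_map. reflexivity. Qed.
Lemma sumR_map {A B} (l : list A) (g : A -> B) f : sumR (map g l) f = sumR l (fun a => f (g a)).
Proof. unfold sumR. rewrite map_map. reflexivity. Qed.
Lemma sumR_filter {A} (l : list A) p f :
  sumR (filter p l) f = sumR l (fun x => if p x then f x else 0).
Proof. induction l. reflexivity. simpl filter. destruct (p a) eqn:E; rewrite ?sumR_cons, IHl, ?E; lra. Qed.

Lemma sumR_remove {A} (dec : forall x y : A, {x = y} + {x <> y}) (l : list A) f x :
  In x l -> (forall y, In y l -> 0 <= f y) -> sumR (remove dec x l) f + f x <= sumR l f.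
Proof.
  induction l as [|a l IH]; intros Hin Hnn; [destruct Hin|].
  simpl. destruct (dec x a) as [e|ne].
  - subst a. rewrite sumR_cons.
    destruct (in_dec dec x l) as [i|ni].
    + specialize (IH i (fun y h => Hnn y (or_intror h))).
      assert (0 <= f x) by (apply Hnn; simpl; auto). lra.
    + rewrite notin_remove by auto. lra.
  - rewrite !sumR_cons. destruct Hin as [e|i]; [congruence|].
    specialize (IH i (fun y h => Hnn y (or_intror h))).
    lra.
Qed.

Lemma sumR_inj {A B} (dec : forall x y : B, {x = y} + {x <> y})
  (l' : list A) (l : list B) (F : A -> R) (f : B -> R) (phi : A -> B) :
  NoDup l' ->
  (forall a, In a l' -> 0 <= F a) ->
  (forall b, In b l -> 0 <= f b) ->
  (forall a, In a l' -> F a <> 0 -> F a <= f (phi a) /\ In (phi a) l) ->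
  (forall a b, In a l' -> In b l' -> F a <> 0 -> F b <> 0 -> phi a = phi b -> a = b) ->
  sumR l' F <= sumR l f.
Proof.
  revert l. induction l' as [|a l' IH]; intros l Hnd HF Hf Hphi Hinj.
  - rewrite sumR_nil. apply sumR_nonneg; auto.
  - inversion Hnd as [|? ? Hna Hnd']; subst.
    rewrite sumR_cons.
    destruct (Req_dec (F a) 0) as [z|nz].
    + rewrite z. assert (sumR l' F <= sumR l f).
      { apply IH; auto. intros; apply HF; simpl; auto.
        intros; apply Hphi; simpl; auto. intros; apply Hinj; simpl; auto. }
      lra.
    + destruct (Hphi a (or_introl eq_refl) nz) as [H1 H2].
      pose proof (sumR_remove dec l f (phi a) H2 Hf) as Hr.
      assert (sumR l' F <= sumR (remove dec (phi a) l) f).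
      { apply IH; auto.
        - intros; apply HF; simpl; auto.
        - intros b Hb. apply Hf. eapply in_remove; eauto.
        - intros b Hb Fb. destruct (Hphi b (or_intror Hb) Fb) as [G1 G2]. split; auto.
          apply in_in_remove; auto. intros e. apply Hna.
          assert (b = a) by (apply Hinj; simpl; auto). subst; auto.
        - intros; apply Hinj; simpl; auto. }
      lra.
Qed.

Lemma sumR_single {A} (l : list A) f x : In x l -> (forall y, In y l -> 0 <= f y) -> f x <= sumR l f.
Proof.
  induction l as [|a l IH]; intros Hin Hnn; [destruct Hin|]. rewrite sumR_cons.
  destruct Hin as [e|i].
  - subst. assert (0 <= sumR l f) by (apply sumR_nonneg; intros; apply Hnn; simpl; auto). lra.
  - assert (0 <= f a) by (apply Hnn; simpl; auto). specialize (IH i (fun y h => Hnn y (or_intror h))). lra.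
Qed.

Lemma sumC_fst {A} (l : list A) (f : A -> C) : fst (sumC l f) = sumR l (fun a => fst (f a)).
Proof. induction l; simpl. reflexivity. unfold sumC in *. simpl. rewrite IHl. reflexivity. Qed.
Lemma sumC_snd {A} (l : list A) (f : A -> C) : snd (sumC l f) = sumR l (fun a => snd (f a)).
Proof. induction l; simpl. reflexivity. unfold sumC in *. simpl. rewrite IHl. reflexivity. Qed.

Lemma Cmod_sq (z : C) : Cmod z ^ 2 = fst z ^ 2 + snd z ^ 2.
Proof. unfold Cmod. rewrite pow2_sqrt. reflexivity. pose proof (pow2_ge_0 (fst z)). pose proof (pow2_ge_0 (snd z)). lra. Qed.

Lemma SQ {A} (l : list A) (w phi : A -> R) :
  (sumR l (fun i => w i * cos (2 * PI * phi i))) ^ 2 + (sumR l (fun i => w i * sin (2 * PI * phi i))) ^ 2 =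
  sumR l (fun i => sumR l (fun j => w i * w j * cos (2 * PI * (phi i - phi j)))).
Proof.
  rewrite <- !Rsqr_pow2. unfold Rsqr. rewrite !sumR_mult. rewrite <- sumR_plus. apply sumR_ext. intros i _.
  rewrite <- sumR_plus. apply sumR_ext. intros j _.
  replace (2 * PI * (phi i - phi j)) with (2 * PI * phi i - 2 * PI * phi j) by ring.
  rewrite cos_minus. ring.
Qed.

Lemma Rleb_true a b : Rleb a b = true <-> a <= b.
Proof. unfold Rleb. destruct (Rle_dec a b); split; intros; auto; try discriminate; contradiction. Qed.

Lemma up_abs_pos B : (0 < up (Rabs B))%Z.
Proof. destruct (archimed (Rabs B)) as [h _]. pose proof (Rabs_pos B). apply lt_IZR. simpl. lra. Qed.

Lemma Nrange_in B n : In n (Nrange_le B) <-> (1 <= n)%nat /\ INR n <= B.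
Proof.
  unfold Nrange_le. rewrite filter_In, in_seq, Rleb_true. split.
  - intros [[h1 h2] h3]. split; auto.
  - intros [h1 h2]. split; auto. split; auto.
    destruct (archimed (Rabs B)) as [h _].
    assert (INR n < IZR (up (Rabs B))) by (pose proof (Rle_abs B); lra).
    rewrite INR_IZR_INZ in H. apply lt_IZR in H. pose proof (up_abs_pos B). lia.
Qed.

Lemma Nrange_nodup B : NoDup (Nrange_le B).
Proof. unfold Nrange_le. apply NoDup_filter, seq_NoDup. Qed.

Lemma Zrange_in H h : In h (Zrange_abs_le H) <-> h <> 0%Z /\ Rabs (IZR h) <= H.
Proof.
  unfold Zrange_abs_le. rewrite filter_In, in_map_iff. split.
  - intros [_ E]. apply andb_true_iff in E. destruct E as [E1 E2].
    apply Rleb_true in E1. apply negb_true_iff, Z.eqb_neq in E2. auto.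
  - intros [h1 h2]. split.
    + set (K := up (Rabs H)).
      exists (h + K)%Z. split; [ring|]. apply in_map_iff. exists (Z.to_nat (h + K)).
      assert (Rabs (IZR h) < IZR K).
      { destruct (archimed (Rabs H)) as [a _]. pose proof (Rle_abs H). unfold K. lra. }
      assert (Z.abs h < K)%Z. { apply lt_IZR. rewrite abs_IZR. exact H0. }
      split. rewrite Z2Nat.id; lia. apply in_seq. lia.
    + apply andb_true_iff. split. apply Rleb_true; auto. apply negb_true_iff, Z.eqb_neq. auto.
Qed.

Lemma Zrange_nodup H : NoDup (Zrange_abs_le H).
Proof.
  unfold Zrange_abs_le. apply NoDup_filter. apply NoDup_map_NoDup_ForallPairs.
  intros a b _ _ E. lia. apply NoDup_map_NoDup_ForallPairs. intros a b _ _ E; lia. apply seq_NoDup.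
Qed.

Lemma sumR_seq_pad (T1 T2 : nat) (P : nat -> bool) f :
  (forall n, (T1 < n)%nat -> P n = false) -> (T1 <= T2)%nat ->
  sumR (seq 1 T2) (fun n => if P n then f n else 0) = sumR (seq 1 T1) (fun n => if P n then f n else 0).
Proof.
  intros HP Hle. replace T2 with (T1 + (T2 - T1))%nat by lia. rewrite seq_app, sumR_app.
  rewrite (sumR_ext (seq (1 + T1) (T2 - T1)) _ (fun _ => 0)). rewrite sumR_zero. ring.
  intros n Hn. apply in_seq in Hn. rewrite HP by lia. reflexivity.
Qed.

Lemma Nrange_pad B T f : B <= INR T ->
  sumR (Nrange_le B) f = sumR (seq 1 T) (fun n => if Rleb (INR n) B then f n else 0).
Proof.
  intros HB. unfold Nrange_le. rewrite sumR_filter.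
  set (T1 := Z.to_nat (up (Rabs B))).
  assert (HP : forall n, (T1 < n)%nat -> Rleb (INR n) B = false).
  { intros n Hn. unfold Rleb. destruct (Rle_dec (INR n) B) as [h|h]; auto. exfalso.
    destruct (archimed (Rabs B)) as [a _]. pose proof (Rle_abs B).
    assert (INR n < IZR (up (Rabs B))) by lra. rewrite INR_IZR_INZ in H0. apply lt_IZR in H0.
    unfold T1 in Hn. pose proof (up_abs_pos B). lia. }
  assert (HP2 : forall n, (T < n)%nat -> Rleb (INR n) B = false).
  { intros n Hn. unfold Rleb. destruct (Rle_dec (INR n) B) as [h|h]; auto. exfalso.
    apply lt_INR in Hn. lra. }
  destruct (Nat.le_ge_cases T1 T) as [h|h].
  - symmetry. apply sumR_seq_pad; auto.
  - apply sumR_seq_pad; auto.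
Qed.

Lemma PI_gt3 : 3 < PI.
Proof. pose proof PI2_3_2. lra. Qed.

Lemma sin_lb_third y : 0 <= y <= 2 -> y / 3 <= sin_lb y.
Proof.
  intros [h1 h2].
  assert (E : sin_lb y = y - y^3/6 + y^5/120 - y^7/5040) by (unfold sin_lb, sin_approx, sin_term; simpl; field).
  rewrite E.
  set (z := y * y).
  assert (0 <= z <= 4) by (unfold z; split; nra).
  assert (0 <= 2/3 - z/6 + z*z/120 - z*z*z/5040) by nra.
  assert (0 <= y * (2/3 - z/6 + z*z/120 - z*z*z/5040)) by (apply Rmult_le_pos; lra).
  assert (y - y ^ 3 / 6 + y ^ 5 / 120 - y ^ 7 / 5040 - y / 3 = y * (2/3 - z/6 + z*z/120 - z*z*z/5040)) by (unfold z; field).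
  lra.
Qed.

Lemma one_minus_cos_lb t : 0 <= t <= PI -> t ^ 2 / 18 <= 1 - cos t.
Proof.
  intros [h1 h2]. pose proof PI_4.
  replace t with (2 * (t / 2)) at 2 by field.
  rewrite cos_2a_sin.
  assert (A : t / 2 / 3 <= sin (t / 2)).
  { eapply Rle_trans. apply sin_lb_third. lra. apply SIN; lra. }
  assert (0 <= t / 2 / 3) by lra.
  assert ((t/2/3) * (t/2/3) <= sin (t/2) * sin (t/2)) by (apply Rmult_le_compat; lra).
  nra.
Qed.

Lemma sum_sq (K : nat) : sumR (seq 1 K) (fun k => INR k ^ 2) = INR K * (INR K + 1) * (2 * INR K + 1) / 6.
Proof.
  induction K. { unfold sumR; simpl; lra. }
  rewrite seq_S, sumR_app, IHK, sumR_cons, sumR_nil. replace (1 + K)%nat with (S K) by lia.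
  rewrite S_INR. field.
Qed.

Lemma sum_sq_lb (K : nat) : INR K ^ 3 / 3 <= sumR (seq 1 K) (fun k => INR k ^ 2).
Proof. rewrite sum_sq. pose proof (pos_INR K). nra. Qed.

Lemma cos_shift_Z x (z : Z) : cos (x + 2 * PI * IZR z) = cos x.
Proof.
  destruct (Z_le_gt_dec 0 z) as [h|h].
  - rewrite <- (Z2Nat.id z h), <- INR_IZR_INZ.
    replace (x + 2 * PI * INR (Z.to_nat z)) with (x + 2 * INR (Z.to_nat z) * PI) by ring.
    apply cos_period.
  - assert (h' : (0 <= - z)%Z) by lia.
    pose proof (cos_period (x + 2 * PI * IZR z) (Z.to_nat (- z))) as E.
    rewrite INR_IZR_INZ, Z2Nat.id, opp_IZR in E by lia.
    rewrite <- E. f_equal. ring.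
Qed.
Lemma sin_shift_Z x (z : Z) : sin (x + 2 * PI * IZR z) = sin x.
Proof.
  destruct (Z_le_gt_dec 0 z) as [h|h].
  - rewrite <- (Z2Nat.id z h), <- INR_IZR_INZ.
    replace (x + 2 * PI * INR (Z.to_nat z)) with (x + 2 * INR (Z.to_nat z) * PI) by ring.
    apply sin_period.
  - pose proof (sin_period (x + 2 * PI * IZR z) (Z.to_nat (- z))) as E.
    rewrite INR_IZR_INZ, Z2Nat.id, opp_IZR in E by lia.
    rewrite <- E. f_equal. ring.
Qed.

(* telescoping *)
Lemma cos_odd_sum (a : R) (n : nat) :
  2 * sin a * sumR (seq 0 n) (fun j => cos ((2 * INR j + 1) * a)) = sin (2 * INR n * a).
Proof.
  induction n.
  - unfold sumR; simpl. replace (2 * 0 * a) with 0 by ring. rewrite sin_0. ring.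
  - rewrite seq_S, sumR_app, Rmult_plus_distr_l, IHn. rewrite sumR_cons, sumR_nil.
    simpl (0 + n)%nat. rewrite S_INR.
    replace (2 * (INR n + 1) * a) with ((2 * INR n + 1) * a + a) by ring.
    replace (2 * INR n * a) with ((2 * INR n + 1) * a - a) by ring.
    rewrite sin_plus, sin_minus. ring.
Qed.

Lemma sin_pi_mult_nonzero (t : Z) (Q : nat) :
  (0 < Q)%nat -> (t mod Z.of_nat Q <> 0)%Z -> sin (PI * IZR t / INR Q) <> 0.
Proof.
  intros HQ Ht E. apply sin_eq_0_0 in E. destruct E as [k Hk].
  apply Ht. assert (IZR t = IZR k * INR Q).
  { assert (INR Q <> 0) by (apply not_0_INR; lia).
    apply (Rmult_eq_reg_l PI); [|apply PI_neq0].
    replace (PI * IZR t) with (PI * IZR t / INR Q * INR Q) by (field; auto).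
    rewrite Hk. ring. }
  rewrite INR_IZR_INZ, <- mult_IZR in H. apply eq_IZR in H. subst t.
  apply Z_mod_mult.
Qed.

Section Orth.
Variable Qn : nat.
Hypothesis HQ : (1 <= Qn)%nat.
Definition ks := map (fun j => (2 * j + 1)%nat) (seq 0 Qn).

Definition OS (t : Z) : R :=
  sumR ks (fun k => cos (2 * PI * (INR k * IZR t / INR (2 * Qn)))).

Lemma OS_rewrite t : OS t = sumR (seq 0 Qn) (fun j => cos ((2 * INR j + 1) * (PI * IZR t / INR Qn))).
Proof.
  unfold OS, ks. rewrite sumR_map. apply sumR_ext. intros j _. f_equal.
  rewrite plus_INR, mult_INR, mult_INR. simpl (INR 2). simpl (INR 1).
  assert (INR Qn <> 0) by (apply not_0_INR; lia). field. auto.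
Qed.

Lemma OS_zero t : (t mod Z.of_nat Qn <> 0)%Z -> OS t = 0.
Proof.
  intros Ht. rewrite OS_rewrite.
  pose proof (cos_odd_sum (PI * IZR t / INR Qn) Qn) as E.
  assert (sin (2 * INR Qn * (PI * IZR t / INR Qn)) = 0).
  { replace (2 * INR Qn * (PI * IZR t / INR Qn)) with (0 + 2 * PI * IZR t).
    rewrite sin_shift_Z. apply sin_0.
    assert (INR Qn <> 0) by (apply not_0_INR; lia). field. auto. }
  rewrite H in E. apply Rmult_integral in E. destruct E as [E|E]; auto.
  exfalso. apply Rmult_integral in E. destruct E as [E|E]; [lra|].
  apply (sin_pi_mult_nonzero t Qn); auto; lia.
Qed.

Lemma OS_even t : (t mod (2 * Z.of_nat Qn) = 0)%Z -> OS t = INR Qn.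
Proof.
  intros Ht. apply Z_div_exact_2 in Ht; [|lia].
  rewrite OS_rewrite.
  rewrite (sumR_ext _ _ (fun _ => 1)). rewrite sumR_const, length_seq. ring.
  intros j _. set (s := (t / (2 * Z.of_nat Qn))%Z) in *.
  replace ((2 * INR j + 1) * (PI * IZR t / INR Qn)) with (0 + 2 * PI * IZR ((2 * Z.of_nat j + 1) * s)).
  rewrite cos_shift_Z. apply cos_0.
  rewrite Ht. rewrite !mult_IZR, plus_IZR, mult_IZR, <- !INR_IZR_INZ. simpl (IZR 2). simpl (IZR 1).
  assert (INR Qn <> 0) by (apply not_0_INR; lia). field. auto.
Qed.

Lemma OS_odd t : (t mod (2 * Z.of_nat Qn) = Z.of_nat Qn)%Z -> OS t = - INR Qn.
Proof.
  intros Ht.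
  assert (E : t = (2 * Z.of_nat Qn * (t / (2 * Z.of_nat Qn)) + Z.of_nat Qn)%Z).
  { pose proof (Z_div_mod_eq_full t (2 * Z.of_nat Qn)) as H0. rewrite Ht in H0. exact H0. }
  rewrite OS_rewrite.
  rewrite (sumR_ext _ _ (fun _ => -1)). rewrite sumR_const, length_seq. ring.
  intros j _. set (s := (t / (2 * Z.of_nat Qn))%Z) in *.
  replace ((2 * INR j + 1) * (PI * IZR t / INR Qn)) with (PI + 2 * PI * IZR ((2 * Z.of_nat j + 1) * s + Z.of_nat j)).
  rewrite cos_shift_Z. apply cos_PI.
  rewrite E. rewrite !plus_IZR, !mult_IZR, plus_IZR, mult_IZR, <- !INR_IZR_INZ. simpl (IZR 2). simpl (IZR 1).
  assert (INR Qn <> 0) by (apply not_0_INR; lia). field. auto.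
Qed.

Lemma OS_cases t :
  ((t mod (2 * Z.of_nat Qn) = 0)%Z /\ OS t = INR Qn) \/
  ((t mod (2 * Z.of_nat Qn) = Z.of_nat Qn)%Z /\ OS t = - INR Qn) \/
  ((t mod (2 * Z.of_nat Qn) <> 0)%Z /\ (t mod (2 * Z.of_nat Qn) <> Z.of_nat Qn)%Z /\ OS t = 0).
Proof.
  destruct (Z.eq_dec (t mod (2 * Z.of_nat Qn)) 0) as [e|e].
  { left. split; auto. apply OS_even; auto. }
  destruct (Z.eq_dec (t mod (2 * Z.of_nat Qn)) (Z.of_nat Qn)) as [e'|e'].
  { right; left. split; auto. apply OS_odd; auto. }
  right; right. split; [auto|split; [auto|]]. apply OS_zero.
  intros h. apply Z.mod_divide in h; [|lia]. destruct h as [c hc]. subst t.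
  assert (0 <= (c * Z.of_nat Qn) mod (2 * Z.of_nat Qn) < 2 * Z.of_nat Qn)%Z by (apply Z.mod_pos_bound; lia).
  destruct (Z.Even_or_Odd c) as [[d hd]|[d hd]]; subst c.
  - apply e. replace (2 * d * Z.of_nat Qn)%Z with (d * (2 * Z.of_nat Qn))%Z by ring. apply Z_mod_mult.
  - apply e'. replace ((2 * d + 1) * Z.of_nat Qn)%Z with (Z.of_nat Qn + d * (2 * Z.of_nat Qn))%Z by ring.
    rewrite Z_mod_plus_full. apply Z.mod_small. lia.
Qed.
End Orth.

Section Chi.
Variable q Qn : nat.
Variable g : Z.
Hypothesis HQ : (q = 2 * Qn + 1)%nat.
Hypothesis HQpos : (1 <= Qn)%nat.
Hypothesis qprime : prime (Z.of_nat q).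
Hypothesis P1 : forall i j : nat, (g ^ Z.of_nat i) mod Z.of_nat q = (g ^ Z.of_nat j) mod Z.of_nat q <->
   (i mod (2 * Qn) = j mod (2 * Qn))%nat.
Hypothesis P2 : forall n : Z, n mod Z.of_nat q <> 0%Z ->
   exists i, (i < 2 * Qn)%nat /\ (g ^ Z.of_nat i) mod Z.of_nat q = n mod Z.of_nat q.
Hypothesis P3 : (g ^ Z.of_nat Qn + 1) mod Z.of_nat q = 0%Z.

Let qZ := Z.of_nat q.
Lemma qZpos : (0 < qZ)%Z. Proof. unfold qZ. lia. Qed.

Definition ind (n : Z) : nat :=
  hd 0%nat (filter (fun i => Z.eqb ((g ^ Z.of_nat i) mod qZ) (n mod qZ)) (seq 0 (2 * Qn))).

Lemma ind_spec n : (n mod qZ <> 0)%Z ->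
  (ind n < 2 * Qn)%nat /\ (g ^ Z.of_nat (ind n)) mod qZ = n mod qZ.
Proof.
  intros Hn. destruct (P2 n Hn) as [i [Hi Ei]].
  unfold ind.
  remember (filter (fun i => Z.eqb ((g ^ Z.of_nat i) mod qZ) (n mod qZ)) (seq 0 (2 * Qn))) as l.
  assert (In i l). { subst l. apply filter_In. split. apply in_seq. lia. apply Z.eqb_eq. exact Ei. }
  destruct l as [|j l]; [destruct H|]. simpl.
  assert (In j (j :: l)) by (simpl; auto). rewrite Heql in H0. apply filter_In in H0.
  destruct H0 as [H0 H1]. apply in_seq in H0. apply Z.eqb_eq in H1. split; [lia|exact H1].
Qed.

Lemma ind_unique n j : (j < 2 * Qn)%nat -> (g ^ Z.of_nat j) mod qZ = n mod qZ -> (n mod qZ <> 0)%Z -> ind n = j.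
Proof.
  intros Hj E Hn. destruct (ind_spec n Hn) as [H1 H2].
  assert ((ind n) mod (2*Qn) = j mod (2 * Qn))%nat. { apply P1. fold qZ. congruence. }
  rewrite !Nat.mod_small in H by lia. exact H.
Qed.

Lemma ind_mult m n : (m mod qZ <> 0)%Z -> (n mod qZ <> 0)%Z -> ((m * n) mod qZ <> 0)%Z ->
  exists s : nat, (ind m + ind n = ind (m * n) + s * (2 * Qn))%nat.
Proof.
  intros Hm Hn Hmn.
  destruct (ind_spec m Hm) as [A1 A2]. destruct (ind_spec n Hn) as [B1 B2]. destruct (ind_spec _ Hmn) as [C1 C2].
  assert ((ind m + ind n) mod (2 * Qn) = ind (m * n) mod (2 * Qn))%nat.
  { apply P1. fold qZ. rewrite C2. rewrite Nat2Z.inj_add, Z.pow_add_r by lia.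
    rewrite Z.mul_mod, A2, B2, <- Z.mul_mod by (unfold qZ; lia). reflexivity. }
  rewrite (Nat.mod_small (ind (m*n))) in H by lia.
  exists ((ind m + ind n) / (2 * Qn))%nat.
  pose proof (Nat.div_mod (ind m + ind n) (2 * Qn)) as D. lia.
Qed.

Lemma mod_mult_nonzero m n : (m mod qZ <> 0)%Z -> (n mod qZ <> 0)%Z -> ((m * n) mod qZ <> 0)%Z.
Proof.
  intros Hm Hn E. apply Z.mod_divide in E; [|unfold qZ; lia].
  destruct (prime_mult _ qprime m n E) as [D|D]; apply Z.mod_divide in D; unfold qZ in *; lia.
Qed.

Definition ecis (t : R) : C := (cos (2 * PI * t), sin (2 * PI * t)).

Definition chi (k : nat) (n : Z) : C :=
  if Z.eqb (n mod qZ) 0 then RtoC 0 else ecis (INR k * INR (ind n) / INR (2 * Qn)).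

Lemma ecis_add a b : ecis (a + b) = Cmult (ecis a) (ecis b).
Proof.
  unfold ecis, Cmult; simpl.
  replace (2 * PI * (a + b)) with (2 * PI * a + 2 * PI * b) by ring.
  rewrite cos_plus, sin_plus. f_equal; ring.
Qed.

Lemma ecis_Z a (z : Z) : ecis (a + IZR z) = ecis a.
Proof.
  unfold ecis. replace (2 * PI * (a + IZR z)) with (2 * PI * a + 2 * PI * IZR z) by ring.
  rewrite cos_shift_Z, sin_shift_Z. reflexivity.
Qed.

Lemma ind_one : ind 1 = 0%nat.
Proof.
  apply ind_unique; [lia| |].
  - simpl. reflexivity.
  - rewrite Z.mod_1_l; [lia|]. unfold qZ. pose proof (prime_ge_2 _ qprime). lia.
Qed.

Lemma chi_dirichlet k : dirichlet_char (Z.of_nat q) (chi k).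
Proof.
  assert (q2 : (2 <= qZ)%Z) by (apply prime_ge_2; exact qprime).
  assert (HQn : INR (2 * Qn) <> 0) by (apply not_0_INR; lia).
  unfold dirichlet_char. fold qZ. split; [|split; [|split]].
  - unfold chi. rewrite Z.mod_1_l by lia. simpl (Z.eqb 1 0). rewrite ind_one.
    unfold ecis. replace (2 * PI * (INR k * INR 0 / INR (2 * Qn))) with 0 by (simpl INR; field; auto).
    rewrite cos_0, sin_0. reflexivity.
  - intros m n. unfold chi.
    destruct (Z.eqb_spec (m mod qZ) 0) as [Hm|Hm].
    + assert (E : ((m * n) mod qZ = 0)%Z).
      { rewrite Z.mul_mod, Hm by lia. simpl. apply Z.mod_0_l. lia. }
      rewrite E. simpl. unfold Cmult, RtoC; simpl. f_equal; ring.
    + destruct (Z.eqb_spec (n mod qZ) 0) as [Hn|Hn].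
      * assert (E : ((m * n) mod qZ = 0)%Z).
        { rewrite Z.mul_mod, Hn by lia. rewrite Z.mul_0_r. apply Z.mod_0_l. lia. }
        rewrite E. simpl. unfold Cmult, RtoC; simpl. f_equal; ring.
      * pose proof (mod_mult_nonzero m n Hm Hn) as Hmn.
        destruct (Z.eqb_spec ((m * n) mod qZ) 0) as [e|_]; [contradiction|].
        rewrite <- ecis_add.
        destruct (ind_mult m n Hm Hn Hmn) as [s Hs].
        replace (INR k * INR (ind m) / INR (2 * Qn) + INR k * INR (ind n) / INR (2 * Qn))
          with (INR k * INR (ind (m * n)) / INR (2 * Qn) + IZR (Z.of_nat (k * s))).
        symmetry; apply ecis_Z.
        rewrite <- INR_IZR_INZ. rewrite (mult_INR k s).
        assert (E2 : INR (ind m) + INR (ind n) = INR (ind (m * n)) + INR s * INR (2 * Qn)).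
        { rewrite <- !plus_INR, <- mult_INR, <- plus_INR. f_equal. exact Hs. }
        apply (Rmult_eq_reg_r (INR (2 * Qn))); auto.
        replace ((INR k * INR (ind m) / INR (2 * Qn) + INR k * INR (ind n) / INR (2 * Qn)) * INR (2 * Qn))
          with (INR k * (INR (ind m) + INR (ind n))) by (field; auto).
        rewrite E2. field. auto.
  - intros n. assert (E : ((n + qZ) mod qZ = n mod qZ)%Z).
    { replace (n + qZ)%Z with (n + 1 * qZ)%Z by ring. apply Z_mod_plus_full. }
    unfold chi. rewrite E.
    replace (ind (n + qZ)) with (ind n). reflexivity.
    unfold ind. rewrite E. reflexivity.
  - intros n Hg. unfold chi.
    assert (E : (n mod qZ = 0)%Z).
    { destruct (Z.eq_dec (n mod qZ) 0) as [e|ne]; auto. exfalso. apply Hg.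
      apply Zgcd_1_rel_prime. apply rel_prime_sym. apply prime_rel_prime; auto.
      intros D. apply Z.mod_divide in D; lia. }
    rewrite E. reflexivity.
Qed.

Lemma modm1 : ((-1) mod qZ = qZ - 1)%Z.
Proof.
  assert (q2 : (2 <= qZ)%Z) by (apply prime_ge_2; exact qprime).
  symmetry. apply (Z.mod_unique (-1) qZ (-1)); lia.
Qed.

Lemma ind_minus_one : ind (-1) = Qn.
Proof.
  assert (q2 : (2 <= qZ)%Z) by (apply prime_ge_2; exact qprime).
  assert (Hm : ((-1) mod qZ <> 0)%Z).
  { rewrite modm1; lia. }
  apply ind_unique; [lia| |auto].
  fold qZ in P3.
  assert (E : (g ^ Z.of_nat Qn) mod qZ = ((g ^ Z.of_nat Qn + 1) + (-1)) mod qZ) by (f_equal; ring).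
  rewrite E, Zplus_mod, P3. simpl. rewrite Z.mod_mod by lia. reflexivity.
Qed.

Lemma chi_nonprincipal k : Nat.odd k = true -> non_principal (Z.of_nat q) (chi k).
Proof.
  intros Hk. exists (-1)%Z.
  assert (q2 : (2 <= qZ)%Z) by (apply prime_ge_2; exact qprime).
  unfold chi, principal_char. fold qZ.
  assert (Hm : ((-1) mod qZ <> 0)%Z).
  { rewrite modm1; lia. }
  destruct (Z.eqb_spec ((-1) mod qZ) 0) as [e|_]; [contradiction|].
  replace (Z.gcd (-1) qZ) with 1%Z.
  2: { change (-1)%Z with (- (1))%Z. rewrite Z.gcd_opp_l. symmetry. apply Z.gcd_1_l. }
  simpl Z.eqb. rewrite ind_minus_one.
  destruct (Nat.odd_spec k) as [H _]. destruct (H Hk) as [j Hj]. subst k.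
  replace (INR (2 * j + 1) * INR Qn / INR (2 * Qn)) with (/2 + IZR (Z.of_nat j)).
  2: { rewrite <- INR_IZR_INZ, plus_INR, !mult_INR. simpl. assert (INR Qn <> 0) by (apply not_0_INR; lia). field. auto. }
  rewrite ecis_Z. unfold ecis. replace (2 * PI * / 2) with PI by field.
  rewrite cos_PI. intros E. unfold RtoC in E. injection E. lra.
Qed.

Lemma gQ_mod : ((g ^ Z.of_nat Qn) mod qZ = (-1) mod qZ)%Z.
Proof.
  assert (q2 : (2 <= qZ)%Z) by (apply prime_ge_2; exact qprime).
  fold qZ in P3.
  assert (E : (g ^ Z.of_nat Qn) mod qZ = ((g ^ Z.of_nat Qn + 1) + (-1)) mod qZ) by (f_equal; ring).
  rewrite E, Zplus_mod, P3. simpl. rewrite Z.mod_mod by lia. reflexivity.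
Qed.

Lemma small_cong n1 n2 : (Z.abs n1 <= Z.of_nat Qn)%Z -> (Z.abs n2 <= Z.of_nat Qn)%Z ->
  (n1 mod qZ = n2 mod qZ)%Z -> n1 = n2.
Proof.
  intros H1 H2 E.
  assert (D : (qZ | n1 - n2)%Z).
  { apply Z.mod_divide. unfold qZ; lia. rewrite Zminus_mod, E, Z.sub_diag. apply Z.mod_0_l. unfold qZ; lia. }
  destruct D as [c Hc]. unfold qZ in Hc. rewrite HQ in Hc.
  assert (c = 0%Z) by nia. subst c. lia.
Qed.

Lemma natmod_Z a b m : (0 < m)%nat -> (a mod m = b mod m)%nat <->
  ((Z.of_nat a - Z.of_nat b) mod Z.of_nat m = 0)%Z.
Proof.
  intros Hm. split; intros E.
  - rewrite Zminus_mod. rewrite <- !Nat2Z.inj_mod, E, Z.sub_diag. apply Z.mod_0_l. lia.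
  - apply Z.mod_divide in E; [|lia]. destruct E as [c Hc].
    apply Nat2Z.inj. rewrite !Nat2Z.inj_mod.
    replace (Z.of_nat a) with (Z.of_nat b + c * Z.of_nat m)%Z by lia.
    apply Z_mod_plus_full.
Qed.

Lemma ORTH (D1 D2 : nat) (n1 n2 : Z) :
  n1 <> 0%Z -> n2 <> 0%Z -> (Z.abs n1 <= Z.of_nat Qn)%Z -> (Z.abs n2 <= Z.of_nat Qn)%Z ->
  (g ^ Z.of_nat D1) mod qZ = n1 mod qZ -> (g ^ Z.of_nat D2) mod qZ = n2 mod qZ ->
  OS Qn (Z.of_nat D1 - Z.of_nat D2) =
    (if Z.eq_dec n1 n2 then INR Qn else 0) - (if Z.eq_dec n1 (- n2)%Z then INR Qn else 0).
Proof.
  intros nz1 nz2 b1 b2 E1 E2.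
  assert (q2 : (2 <= qZ)%Z) by (apply prime_ge_2; exact qprime).
  assert (m2 : (Z.of_nat (2 * Qn) = 2 * Z.of_nat Qn)%Z) by lia.
  assert (K1 : n1 = n2 <-> ((Z.of_nat D1 - Z.of_nat D2) mod (2 * Z.of_nat Qn) = 0)%Z).
  { rewrite <- m2, <- natmod_Z by lia. rewrite <- P1. fold qZ. rewrite E1, E2. split; intros H.
    - subst; auto.
    - apply small_cong; auto. }
  assert (K2 : n1 = (- n2)%Z <-> ((Z.of_nat D1 - Z.of_nat D2) mod (2 * Z.of_nat Qn) = Z.of_nat Qn)%Z).
  { assert (A : ((Z.of_nat D1 - Z.of_nat D2) mod (2 * Z.of_nat Qn) = Z.of_nat Qn)%Z <->
               ((Z.of_nat D1 - Z.of_nat (D2 + Qn)) mod (2 * Z.of_nat Qn) = 0)%Z).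
    { rewrite Nat2Z.inj_add.
      replace (Z.of_nat D1 - (Z.of_nat D2 + Z.of_nat Qn))%Z with ((Z.of_nat D1 - Z.of_nat D2) - Z.of_nat Qn)%Z by ring.
      split; intros H.
      - rewrite Zminus_mod, H, (Z.mod_small (Z.of_nat Qn)), Z.sub_diag by lia. apply Z.mod_0_l. lia.
      - apply Z.mod_divide in H; [|lia]. destruct H as [c Hc].
        replace (Z.of_nat D1 - Z.of_nat D2)%Z with (Z.of_nat Qn + c * (2 * Z.of_nat Qn))%Z by lia.
        rewrite Z_mod_plus_full. apply Z.mod_small. lia. }
    rewrite A, <- m2, <- natmod_Z by lia. rewrite <- P1. fold qZ.
    rewrite E1, Nat2Z.inj_add, Z.pow_add_r by lia.
    rewrite Z.mul_mod, E2, gQ_mod, <- Z.mul_mod by lia.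
    replace (n2 * -1)%Z with (- n2)%Z by ring.
    split; intros H.
    - subst; auto.
    - apply small_cong; auto. lia. }
  destruct (OS_cases Qn HQpos (Z.of_nat D1 - Z.of_nat D2)) as [[C1 C2]|[[C1 C2]|[C1 [C1' C2]]]]; rewrite C2.
  - apply K1 in C1. subst n2. destruct (Z.eq_dec n1 n1); [|congruence].
    destruct (Z.eq_dec n1 (- n1)%Z); [lia|]. ring.
  - apply K2 in C1. subst n1. destruct (Z.eq_dec (- n2)%Z n2); [lia|].
    destruct (Z.eq_dec (- n2)%Z (- n2)%Z); [|congruence]. ring.
  - destruct (Z.eq_dec n1 n2) as [e|e]; [apply K1 in e; contradiction|].
    destruct (Z.eq_dec n1 (- n2)%Z) as [e'|e']; [apply K2 in e'; contradiction|]. ring.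
Qed.

Lemma ORTHSUM {A} (l : list A) (w : A -> R) (D : A -> nat) (n : A -> Z) :
  (forall i, In i l -> n i <> 0%Z /\ (Z.abs (n i) <= Z.of_nat Qn)%Z /\ (g ^ Z.of_nat (D i)) mod qZ = n i mod qZ) ->
  sumR (ks Qn) (fun k =>
     (sumR l (fun i => w i * cos (2 * PI * (INR k * INR (D i) / INR (2 * Qn))))) ^ 2 +
     (sumR l (fun i => w i * sin (2 * PI * (INR k * INR (D i) / INR (2 * Qn))))) ^ 2) =
  sumR l (fun i => sumR l (fun j => w i * w j *
     ((if Z.eq_dec (n i) (n j) then INR Qn else 0) - (if Z.eq_dec (n i) (- n j)%Z then INR Qn else 0)))).
Proof.
  intros Hl.
  assert (HQn : INR (2 * Qn) <> 0) by (apply not_0_INR; lia).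
  rewrite (sumR_ext _ _ (fun k => sumR l (fun i => sumR l (fun j => w i * w j *
      cos (2 * PI * (INR k * IZR (Z.of_nat (D i) - Z.of_nat (D j)) / INR (2 * Qn))))))).
  2: { intros k _. rewrite SQ. apply sumR_ext. intros i _. apply sumR_ext. intros j _.
       f_equal. f_equal. f_equal. rewrite minus_IZR, <- !INR_IZR_INZ. field. auto. }
  rewrite sumR_swap. apply sumR_ext. intros i hi. rewrite sumR_swap. apply sumR_ext. intros j hj.
  rewrite sumR_scal. f_equal.
  destruct (Hl i hi) as [a1 [a2 a3]]. destruct (Hl j hj) as [b1 [b2 b3]].
  rewrite <- (ORTH (D i) (D j) (n i) (n j)); auto.
Qed.
End Chi.

Lemma NoDup_prod {A B} (l1 : list A) (l2 : list B) : NoDup l1 -> NoDup l2 -> NoDup (list_prod l1 l2).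
Proof.
  induction l1 as [|a l1 IH]; intros H1 H2; simpl. constructor.
  inversion H1; subst. apply NoDup_app.
  - apply NoDup_map_NoDup_ForallPairs; auto. intros x y _ _ E. injection E; auto.
  - apply IH; auto.
  - intros [a' b] Hm Hn. apply in_map_iff in Hm. destruct Hm as [b' [E _]]. injection E; intros; subst.
    apply in_prod_iff in Hn. tauto.
Qed.

Lemma prod_dec_nat : forall x y : nat * nat, {x = y} + {x <> y}.
Proof. decide equality; apply Nat.eq_dec. Qed.
Lemma prod_dec_Z : forall x y : Z * Z, {x = y} + {x <> y}.
Proof. decide equality; apply Z.eq_dec. Qed.

Section Comb.
Variables (q N : nat) (r : nat -> R).
Let x := xpar q N.
Let H := Hpar q N.
Hypothesis HN2 : (2 <= N)%nat.
Hypothesis HH : INR N / 2 <= H.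
Hypothesis Hr : forall n, 0 <= r n.
Hypothesis Hmul : multiplicative r.

Definition a (h : Z) : R := (1 - cos (2 * PI * IZR h / INR N)) / IZR h.

Definition Icore (m1 m2 : nat) : R :=
  sumR (Zrange_abs_le H) (fun h1 => sumR (Zrange_abs_le H) (fun h2 =>
    if Z.eq_dec (h1 * Z.of_nat m1) (h2 * Z.of_nat m2) then a h1 * a h2 else 0)).

Lemma NposR : 0 < INR N.
Proof. apply lt_0_INR. lia. Qed.

Lemma a_lb (j : nat) : (1 <= j)%nat -> INR j <= INR N / 2 -> 2 * INR j / INR N ^ 2 <= a (Z.of_nat j).
Proof.
  intros h1 h2. pose proof NposR. pose proof PI_gt3.
  assert (hj : 1 <= INR j) by (apply (le_INR 1); auto).
  unfold a. rewrite <- INR_IZR_INZ.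
  set (t := 2 * PI * INR j / INR N).
  assert (ht : 0 <= t <= PI).
  { unfold t. split. apply Rmult_le_pos; [|apply Rlt_le, Rinv_0_lt_compat; auto]. pose proof PI_RGT_0. nra.
    apply (Rmult_le_reg_r (INR N)); auto. unfold Rdiv. rewrite Rmult_assoc, Rinv_l by lra. nra. }
  pose proof (one_minus_cos_lb t ht) as Hc.
  apply (Rmult_le_reg_r (INR j)); [lra|].
  unfold Rdiv at 2. rewrite Rmult_assoc, Rinv_l, Rmult_1_r by lra.
  eapply Rle_trans; [|exact Hc]. unfold t.
  replace ((2 * PI * INR j / INR N) ^ 2 / 18) with (2 * PI ^ 2 / 9 * (INR j * INR j / INR N ^ 2)) by (field; lra).
  replace (2 * INR j / INR N ^ 2 * INR j) with (2 * (INR j * INR j / INR N ^ 2)) by (field; lra).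
  apply Rmult_le_compat_r. apply Rmult_le_pos. nra. apply Rlt_le, Rinv_0_lt_compat. nra.
  nra.
Qed.

Lemma aa_nonneg h1 h2 : h1 <> 0%Z -> h2 <> 0%Z -> (0 < h1 * h2)%Z -> 0 <= a h1 * a h2.
Proof.
  intros n1 n2 p. unfold a.
  assert (IZR h1 * IZR h2 > 0) by (rewrite <- mult_IZR; apply IZR_lt; lia).
  pose proof (COS_bound (2 * PI * IZR h1 / INR N)) as [_ c1].
  pose proof (COS_bound (2 * PI * IZR h2 / INR N)) as [_ c2].
  replace ((1 - cos (2 * PI * IZR h1 / INR N)) / IZR h1 * ((1 - cos (2 * PI * IZR h2 / INR N)) / IZR h2))
    with ((1 - cos (2 * PI * IZR h1 / INR N)) * (1 - cos (2 * PI * IZR h2 / INR N)) / (IZR h1 * IZR h2))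
    by (field; split; apply not_0_IZR; auto).
  apply Rmult_le_pos. nra. apply Rlt_le, Rinv_0_lt_compat. lra.
Qed.

Lemma Icore_term_nonneg h1 h2 (m1 m2 : nat) : (1 <= m1)%nat -> (1 <= m2)%nat ->
  In h1 (Zrange_abs_le H) -> In h2 (Zrange_abs_le H) ->
  0 <= (if Z.eq_dec (h1 * Z.of_nat m1) (h2 * Z.of_nat m2) then a h1 * a h2 else 0).
Proof.
  intros hm1 hm2 i1 i2. apply Zrange_in in i1. apply Zrange_in in i2.
  destruct (Z.eq_dec _ _) as [e|e]; [|lra].
  apply aa_nonneg; try tauto. destruct i1 as [n1 _]. destruct i2 as [n2 _]. nia.
Qed.

Lemma Icore_nonneg (m1 m2 : nat) : (1 <= m1)%nat -> (1 <= m2)%nat -> 0 <= Icore m1 m2.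
Proof.
  intros. unfold Icore. apply sumR_nonneg. intros. apply sumR_nonneg. intros. apply Icore_term_nonneg; auto.
Qed.

Lemma KS (u v g : nat) : (1 <= u)%nat -> (1 <= v)%nat -> (1 <= g)%nat ->
  INR u <= INR N / 2 -> INR v <= INR N / 2 ->
  INR u * INR v / (48 * INR N * INR (Nat.max u v) ^ 3) <= Icore (g * u) (g * v).
Proof.
  intros hu hv hg bu bv. pose proof NposR as HNp.
  set (M := Nat.max u v).
  assert (bM : INR M <= INR N / 2) by (unfold M; apply Nat.max_case; auto).
  assert (hM : (1 <= M)%nat) by (unfold M; lia).
  assert (hMR : 1 <= INR M) by (apply (le_INR 1); auto).
  set (K := (N / (2 * M))%nat).
  assert (K1 : (K * (2 * M) <= N)%nat) by (unfold K; rewrite Nat.mul_comm; apply Nat.Div0.mul_div_le).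
  assert (K2 : (N < (K + 1) * (2 * M))%nat).
  { unfold K. pose proof (Nat.div_mod N (2 * M)). pose proof (Nat.mod_upper_bound N (2 * M)). lia. }
  assert (KM : (2 * M <= N)%nat).
  { apply INR_le. rewrite mult_INR. simpl (INR 2). lra. }
  assert (K0 : (1 <= K)%nat) by (unfold K; apply Nat.div_le_lower_bound; lia).
  assert (KR : INR N / (4 * INR M) <= INR K).
  { apply lt_INR in K2. rewrite !mult_INR, plus_INR in K2. simpl (INR 1) in K2. simpl (INR 2) in K2.
    apply (le_INR 1) in K0. simpl (INR 1) in K0.
    apply (Rmult_le_reg_r (4 * INR M)). lra. unfold Rdiv. rewrite Rmult_assoc, Rinv_l by lra. nra. }
  assert (KMR : INR K * INR M <= INR N / 2).
  { apply le_INR in K1. rewrite !mult_INR in K1. simpl (INR 2) in K1. lra. }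
  assert (S1 : sumR (seq 1 K) (fun k => a (Z.of_nat (k * v)) * a (Z.of_nat (k * u))) <= Icore (g * u) (g * v)).
  { unfold Icore. apply Rle_trans with (sumR (list_prod (Zrange_abs_le H) (Zrange_abs_le H))
      (fun p => if Z.eq_dec (fst p * Z.of_nat (g * u)) (snd p * Z.of_nat (g * v)) then a (fst p) * a (snd p) else 0)).
    2: { right. rewrite sumR_prod. reflexivity. }
    apply (sumR_inj prod_dec_Z _ _ _ _ (fun k => (Z.of_nat (k * v), Z.of_nat (k * u)))).
    - apply seq_NoDup.
    - intros k hk. apply in_seq in hk. apply aa_nonneg; nia.
    - intros [h1 h2] hp. apply in_prod_iff in hp. simpl. apply Icore_term_nonneg; try tauto; lia.
    - intros k hk _. apply in_seq in hk. simpl. split.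
      + destruct (Z.eq_dec _ _) as [e|e]; [lra|]. exfalso. apply e. lia.
      + assert (Hin : forall w : nat, (1 <= w)%nat -> (w <= M)%nat -> In (Z.of_nat (k * w)) (Zrange_abs_le H)).
        { intros w w1 w2. apply Zrange_in. split; [lia|].
          rewrite <- INR_IZR_INZ, Rabs_pos_eq by apply pos_INR.
          rewrite mult_INR. eapply Rle_trans; [|apply HH]. eapply Rle_trans; [|apply KMR].
          apply Rmult_le_compat; try apply pos_INR; apply le_INR; lia. }
        apply in_prod_iff. split; apply Hin; unfold M; lia.
    - intros k k' _ _ _ _ E. injection E. intros _ E'. nia. }
  assert (S2 : sumR (seq 1 K) (fun k => 4 * INR u * INR v / INR N ^ 4 * INR k ^ 2)
               <= sumR (seq 1 K) (fun k => a (Z.of_nat (k * v)) * a (Z.of_nat (k * u)))).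
  { apply sumR_le. intros k hk. apply in_seq in hk.
    assert (kv1 : INR (k * v) <= INR N / 2).
    { rewrite mult_INR. eapply Rle_trans; [|apply KMR]. apply Rmult_le_compat; try apply pos_INR; apply le_INR; unfold M; lia. }
    assert (ku1 : INR (k * u) <= INR N / 2).
    { rewrite mult_INR. eapply Rle_trans; [|apply KMR]. apply Rmult_le_compat; try apply pos_INR; apply le_INR; unfold M; lia. }
    pose proof (a_lb (k * v) ltac:(nia) kv1) as A1.
    pose proof (a_lb (k * u) ltac:(nia) ku1) as A2.
    rewrite !mult_INR in A1, A2.
    eapply Rle_trans; [|apply Rmult_le_compat; [| |exact A1|exact A2]].
    - right. field. lra.
    - apply Rmult_le_pos. apply Rmult_le_pos. lra. apply Rmult_le_pos; apply pos_INR. apply Rlt_le, Rinv_0_lt_compat. apply pow_lt; lra.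
    - apply Rmult_le_pos. apply Rmult_le_pos. lra. apply Rmult_le_pos; apply pos_INR. apply Rlt_le, Rinv_0_lt_compat. apply pow_lt; lra. }
  rewrite sumR_scal in S2.
  pose proof (sum_sq_lb K) as S3.
  assert (hu' : 1 <= INR u) by (apply (le_INR 1); auto).
  assert (hv' : 1 <= INR v) by (apply (le_INR 1); auto).
  assert (C : INR u * INR v / (48 * INR N * INR M ^ 3) <= 4 * INR u * INR v / INR N ^ 4 * (INR K ^ 3 / 3)).
  { assert (KR3 : (INR N / (4 * INR M)) ^ 3 <= INR K ^ 3).
    { apply pow_incr. split; auto. apply Rlt_le. apply Rdiv_lt_0_compat; lra. }
    replace (INR u * INR v / (48 * INR N * INR M ^ 3)) with (4 * INR u * INR v / INR N ^ 4 * ((INR N / (4 * INR M)) ^ 3 / 3))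
      by (field; lra).
    apply Rmult_le_compat_l. apply Rmult_le_pos. nra. apply Rlt_le, Rinv_0_lt_compat. apply pow_lt; lra.
    lra. }
  assert (0 <= 4 * INR u * INR v / INR N ^ 4).
  { apply Rmult_le_pos. nra. apply Rlt_le, Rinv_0_lt_compat. apply pow_lt; lra. }
  assert (4 * INR u * INR v / INR N ^ 4 * (INR K ^ 3 / 3) <= 4 * INR u * INR v / INR N ^ 4 * sumR (seq 1 K) (fun k => INR k ^ 2))
    by (apply Rmult_le_compat_l; auto).
  fold M. lra.
Qed.


Lemma gcd_split g u v : Nat.gcd g (u * v) = 1%nat -> Nat.gcd g u = 1%nat /\ Nat.gcd g v = 1%nat.
Proof.
  intros E. split; apply Nat.divide_1_r; rewrite <- E; apply Nat.gcd_greatest;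
    try apply Nat.gcd_divide_l.
  - apply Nat.divide_trans with u. apply Nat.gcd_divide_r. apply Nat.divide_factor_l.
  - apply Nat.divide_trans with v. apply Nat.gcd_divide_r. apply Nat.divide_factor_r.
Qed.

Definition Cuv (u v : nat) : R := r u * r v * INR u * INR v / INR (Nat.max u v) ^ 3.

Definition F3 (t : nat * nat * nat) : R :=
  let u := fst (fst t) in let v := snd (fst t) in let g := snd t in
  if Nat.eqb (Nat.gcd u v) 1 then
    (if Rleb (INR g) (xpar q N / INR (Nat.max u v)) then
      (if Nat.eqb (Nat.gcd g (u * v)) 1 then Cuv u v * r g ^ 2 / (48 * INR N) else 0) else 0) else 0.

Lemma RHS_as_F3 (T0 : nat) : xpar q N <= INR T0 ->
  RHS_sum q N r / (48 * INR N) =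
  sumR (list_prod (list_prod (Nrange_le (Rmin (xpar q N) (INR N / 2))) (Nrange_le (Rmin (xpar q N) (INR N / 2)))) (seq 1 T0)) F3.
Proof.
  intros HT. pose proof NposR.
  rewrite sumR_prod, sumR_prod. unfold RHS_sum. cbv zeta.
  unfold Rdiv at 1. rewrite Rmult_comm, <- sumR_scal. apply sumR_ext. intros u hu.
  rewrite <- sumR_scal. apply sumR_ext. intros v hv.
  apply Nrange_in in hu. apply Nrange_in in hv.
  assert (hM : 1 <= INR (Nat.max u v)) by (apply (le_INR 1); lia).
  unfold F3. simpl fst. simpl snd.
  destruct (Nat.eqb (Nat.gcd u v) 1).
  2: { rewrite sumR_zero. ring. }
  rewrite (Nrange_pad _ T0).
  2: { eapply Rle_trans; [|exact HT]. unfold Rdiv. pose proof (Rmin_l (xpar q N) (INR N / 2)).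
       assert (0 <= xpar q N). { destruct hu as [h1 h2]. apply (le_INR 1) in h1. simpl in h1. lra. }
       rewrite <- (Rmult_1_r (xpar q N)) at 2. apply Rmult_le_compat_l; auto.
       rewrite <- Rinv_1. apply Rinv_le_contravar; lra. }
  rewrite <- sumR_scal. rewrite <- sumR_scal. apply sumR_ext. intros g _.
  unfold Cuv. destruct (Rleb _ _); [destruct (Nat.eqb _ _)|]; field; lra.
Qed.

Lemma RHS_bound (T0 : nat) : xpar q N <= INR T0 ->
  RHS_sum q N r / (48 * INR N) <=
  sumR (list_prod (Nrange_le (xpar q N)) (Nrange_le (xpar q N))) (fun p => r (fst p) * r (snd p) * Icore (fst p) (snd p)).
Proof.
  intros HT. pose proof NposR. rewrite (RHS_as_F3 T0 HT).
  destruct Hmul as [Hr1 Hrm].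
  apply (sumR_inj prod_dec_nat _ _ _ _ (fun t => (snd t * fst (fst t), snd t * snd (fst t))%nat)).
  - apply NoDup_prod. apply NoDup_prod; apply Nrange_nodup. apply seq_NoDup.
  - intros [[u v] g] ht. apply in_prod_iff in ht. destruct ht as [ht _]. apply in_prod_iff in ht.
    destruct ht as [hu _]. apply Nrange_in in hu. unfold F3. simpl.
    destruct (Nat.eqb _ _); [destruct (Rleb _ _); [destruct (Nat.eqb _ _)|]|]; try lra.
    unfold Cuv. apply Rmult_le_pos; [|apply Rlt_le, Rinv_0_lt_compat; lra].
    apply Rmult_le_pos; [|apply pow2_ge_0]. apply Rmult_le_pos.
    apply Rmult_le_pos. apply Rmult_le_pos. apply Rmult_le_pos; auto. apply pos_INR. apply pos_INR.
    apply Rlt_le, Rinv_0_lt_compat. apply pow_lt. apply lt_0_INR. lia.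
  - intros [m1 m2] hm. apply in_prod_iff in hm. destruct hm as [h1 h2].
    apply Nrange_in in h1. apply Nrange_in in h2. simpl.
    apply Rmult_le_pos. apply Rmult_le_pos; auto. apply Icore_nonneg; tauto.
  - intros [[u v] g] ht Hne. apply in_prod_iff in ht. destruct ht as [ht hg]. apply in_prod_iff in ht.
    destruct ht as [hu hv]. apply Nrange_in in hu. apply Nrange_in in hv. apply in_seq in hg.
    unfold F3 in *. simpl in *.
    destruct (Nat.eqb_spec (Nat.gcd u v) 1) as [c1|c1]; [|lra].
    destruct (Rleb (INR g) (xpar q N / INR (Nat.max u v))) eqn:c2; [|lra].
    destruct (Nat.eqb_spec (Nat.gcd g (u * v)) 1) as [c3|c3]; [|lra].
    apply Rleb_true in c2. destruct (gcd_split g u v c3) as [gu gv].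
    destruct hu as [hu1 hu2]. destruct hv as [hv1 hv2].
    pose proof (Rmin_l (xpar q N) (INR N / 2)). pose proof (Rmin_r (xpar q N) (INR N / 2)).
    assert (hM : 1 <= INR (Nat.max u v)) by (apply (le_INR 1); lia).
    assert (uM : INR u <= INR (Nat.max u v)) by (apply le_INR; lia).
    assert (vM : INR v <= INR (Nat.max u v)) by (apply le_INR; lia).
    assert (g0 : 0 <= INR g) by apply pos_INR.
    assert (gx : forall w, INR w <= INR (Nat.max u v) -> INR (g * w) <= xpar q N).
    { intros w hw. rewrite mult_INR.
      apply Rle_trans with (xpar q N / INR (Nat.max u v) * INR (Nat.max u v)).
      apply Rmult_le_compat; auto. apply pos_INR. right. field. lra. }
    split.
    + rewrite (Hrm g u gu), (Hrm g v gv).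
      pose proof (KS u v g ltac:(lia) ltac:(lia) ltac:(lia) ltac:(lra) ltac:(lra)) as Kb.
      unfold Cuv.
      apply Rle_trans with (r u * r v * r g ^ 2 * (INR u * INR v / (48 * INR N * INR (Nat.max u v) ^ 3))).
      * right. field. split; lra.
      * replace (r g * r u * (r g * r v) * Icore (g * u) (g * v)) with (r u * r v * r g ^ 2 * Icore (g * u) (g * v)) by ring.
        apply Rmult_le_compat_l; auto. apply Rmult_le_pos. apply Rmult_le_pos; auto. apply pow2_ge_0.
    + apply in_prod_iff. split; apply Nrange_in; split; try nia; apply gx; auto.
  - intros [[u v] g] [[u' v'] g'] ht ht' Hne Hne' E. simpl in E. injection E. intros E2 E1.
    apply in_prod_iff in ht. destruct ht as [_ hg]. apply in_seq in hg.
    apply in_prod_iff in ht'. destruct ht' as [_ hg']. apply in_seq in hg'.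
    unfold F3 in Hne, Hne'. simpl in Hne, Hne'.
    destruct (Nat.eqb_spec (Nat.gcd u v) 1) as [c1|c1]; [|lra].
    destruct (Nat.eqb_spec (Nat.gcd u' v') 1) as [c1'|c1']; [|lra].
    assert (gg : g = g').
    { rewrite <- (Nat.mul_1_r g), <- (Nat.mul_1_r g'). rewrite <- c1 at 1. rewrite <- c1' at 1.
      rewrite <- !Nat.gcd_mul_mono_l. congruence. }
    subst g'. assert (u = u') by nia. assert (v = v') by nia. subst; reflexivity.
Qed.
End Comb.

Lemma divide_nat_Z a b : Nat.divide a b <-> (Z.of_nat a | Z.of_nat b)%Z.
Proof.
  split.
  - intros [k hk]. exists (Z.of_nat k). subst. lia.
  - intros [k hk]. destruct (Nat.eq_dec a 0) as [e|e].
    + subst. simpl in hk. exists 0%nat. lia.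
    + exists (Z.to_nat k). assert (0 <= k)%Z by nia. nia.
Qed.

Lemma prime_divisor_exists (m : nat) : (2 <= m)%nat -> exists p, prime (Z.of_nat p) /\ Nat.divide p m.
Proof.
  induction m as [m IH] using (well_founded_induction lt_wf). intros hm.
  destruct (prime_dec (Z.of_nat m)) as [pm|npm].
  - exists m. split; auto. apply Nat.divide_refl.
  - destruct (not_prime_divide (Z.of_nat m) ltac:(lia) npm) as [n [hn dn]].
    destruct (IH (Z.to_nat n) ltac:(lia) ltac:(lia)) as [p [pp dp]].
    exists p. split; auto. apply Nat.divide_trans with (Z.to_nat n); auto.
    apply divide_nat_Z. rewrite Z2Nat.id by lia. auto.
Qed.

Definition smoothb (P m : nat) : bool :=
  forallb (fun p => negb (if prime_dec (Z.of_nat p) then Nat.eqb (m mod p) 0 else false)) (seq (S P) m).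

Definition smooth (P m : nat) : Prop := forall p, prime (Z.of_nat p) -> Nat.divide p m -> (p <= P)%nat.

Lemma smoothb_spec P m : (1 <= m)%nat -> smoothb P m = true <-> smooth P m.
Proof.
  intros hm. unfold smoothb, smooth. rewrite forallb_forall. split.
  - intros H p pp dp. destruct (Nat.le_gt_cases p P) as [h|h]; auto. exfalso.
    assert (p2 : (2 <= p)%nat) by (pose proof (prime_ge_2 _ pp); lia).
    assert (pm : (p <= m)%nat) by (apply Nat.divide_pos_le; auto; lia).
    specialize (H p ltac:(apply in_seq; lia)).
    destruct (prime_dec (Z.of_nat p)) as [_|n]; [|contradiction].
    apply negb_true_iff, Nat.eqb_neq in H. apply H. apply Nat.Lcm0.mod_divide. auto.
  - intros H p hp. apply in_seq in hp. apply negb_true_iff.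
    destruct (prime_dec (Z.of_nat p)) as [pp|_]; auto.
    apply Nat.eqb_neq. intros e. apply Nat.Lcm0.mod_divide in e. specialize (H p pp e). lia.
Qed.

Section Smooth.
Variable r : nat -> R.
Hypothesis Hr : forall n, 0 <= r n.
Hypothesis Hmul : multiplicative r.
Hypothesis Hsq : forall n, (1 <= n)%nat -> ~ squarefree n -> r n = 0.

Lemma fold_mult_app {A} (f : A -> R) l x : fold_right Rmult 1 (l ++ map f [x]) = fold_right Rmult 1 l * f x.
Proof.
  rewrite fold_right_app. change (fold_right Rmult 1 (map f [x])) with (f x * 1).
  rewrite Rmult_1_r. generalize (f x). intros c. induction l as [|a l IH]; simpl. ring. rewrite IH. ring.
Qed.

Lemma PP_S P : prime_partial_prod r (S P) =
  prime_partial_prod r P * (if prime_dec (Z.of_nat (S P)) then 1 + r (S P) ^ 2 else 1).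
Proof.
  unfold prime_partial_prod. rewrite seq_S, map_app, fold_mult_app. reflexivity.
Qed.

Lemma PP_ge1 P : 1 <= prime_partial_prod r P.
Proof.
  induction P. unfold prime_partial_prod. simpl. lra.
  rewrite PP_S. destruct (prime_dec _). pose proof (pow2_ge_0 (r (S P))). nra. lra.
Qed.

Lemma smooth_sum (P n : nat) :
  sumR (seq 1 n) (fun m => if smoothb P m then r m ^ 2 else 0) <= prime_partial_prod r P.
Proof.
  destruct Hmul as [Hr1 Hrm].
  revert n. induction P; intros n.
  - change (prime_partial_prod r 0) with 1.
    apply Rle_trans with (sumR [1%nat] (fun m => r m ^ 2)).
    2: { right. rewrite sumR_cons, sumR_nil, Hr1. ring. }
    apply (sumR_inj Nat.eq_dec _ _ _ _ (fun _ => 1%nat)).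
    + apply seq_NoDup.
    + intros m _. destruct (smoothb 0 m); [apply pow2_ge_0|lra].
    + intros b _. apply pow2_ge_0.
    + intros m hm hne. apply in_seq in hm.
      destruct (smoothb 0 m) eqn:E; [|lra]. apply smoothb_spec in E; [|lia].
      assert (m = 1%nat).
      { destruct (Nat.eq_dec m 1); auto. destruct (prime_divisor_exists m ltac:(lia)) as [p [pp dp]].
        specialize (E p pp dp). pose proof (prime_ge_2 _ pp). lia. }
      subst. split; [lra|simpl; auto].
    + intros m m' hm hm' h1 h2 _. apply in_seq in hm. apply in_seq in hm'.
      destruct (smoothb 0 m) eqn:E; [|lra]. destruct (smoothb 0 m') eqn:E'; [|lra].
      apply smoothb_spec in E; [|lia]. apply smoothb_spec in E'; [|lia].
      assert (forall k, (1 <= k)%nat -> smooth 0 k -> k = 1%nat).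
      { intros k hk Ek. destruct (Nat.eq_dec k 1); auto. destruct (prime_divisor_exists k ltac:(lia)) as [p [pp dp]].
        specialize (Ek p pp dp). pose proof (prime_ge_2 _ pp). lia. }
      rewrite (H m), (H m'); auto; lia.
  - rewrite PP_S.
    destruct (prime_dec (Z.of_nat (S P))) as [pp|npp].
    +
      set (p := S P) in *.
      assert (p2 : (2 <= p)%nat) by (pose proof (prime_ge_2 _ pp); lia).
      rewrite (sumR_ext _ _ (fun m => (if smoothb P m then r m ^ 2 else 0) +
               (if smoothb p m then (if smoothb P m then 0 else r m ^ 2) else 0))).
      2: { intros m hm. apply in_seq in hm.
           destruct (smoothb P m) eqn:E1; destruct (smoothb p m) eqn:E2; try ring.
           apply smoothb_spec in E1; [|lia]. exfalso. apply Bool.not_true_iff_false in E2. apply E2.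
           apply smoothb_spec; [lia|]. intros p' pp' dp'. specialize (E1 p' pp' dp'). unfold p. lia. }
      rewrite sumR_plus.
      assert (B2 : sumR (seq 1 n) (fun m => if smoothb p m then (if smoothb P m then 0 else r m ^ 2) else 0)
                   <= r p ^ 2 * sumR (seq 1 n) (fun m => if smoothb P m then r m ^ 2 else 0)).
      { rewrite <- sumR_scal.
        apply (sumR_inj Nat.eq_dec _ _ _ _ (fun m => (m / p)%nat)).
        - apply seq_NoDup.
        - intros m _. destruct (smoothb p m); [destruct (smoothb P m)|]; try lra; apply pow2_ge_0.
        - intros m _. apply Rmult_le_pos. apply pow2_ge_0. destruct (smoothb P m); [apply pow2_ge_0|lra].
        - intros m hm hne. apply in_seq in hm.
          destruct (smoothb p m) eqn:E1; [|lra]. destruct (smoothb P m) eqn:E2; [lra|].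
          apply smoothb_spec in E1; [|lia].
          assert (dpm : Nat.divide p m).
          { destruct (Nat.Lcm0.mod_divide m p) as [hh _].
            destruct (Nat.eq_dec (m mod p) 0) as [e|e]. apply hh in e. auto. exfalso.
            apply Bool.not_true_iff_false in E2. apply E2. apply smoothb_spec; [lia|].
            intros p' pp' dp'. specialize (E1 p' pp' dp').
            destruct (Nat.eq_dec p' p) as [ee|ee]. subst p'. exfalso. apply e. apply Nat.Lcm0.mod_divide; auto.
            unfold p in *. lia. }
          destruct dpm as [m' hm']. 
          assert (hmp : (m / p = m')%nat) by (subst m; apply Nat.div_mul; lia).
          rewrite hmp. subst m.
          assert (m'1 : (1 <= m')%nat) by nia.
          assert (rn : r (m' * p)%nat <> 0) by (intros e; apply hne; rewrite e; ring).
          assert (sq : squarefree (m' * p)). { destruct (Classical_Prop.classic (squarefree (m' * p))) as [s|s]; auto.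
                 exfalso. apply rn. apply Hsq; auto. lia. }
          assert (npm' : ~ Nat.divide p m').
          { intros [c hc]. subst m'. assert (p = 1%nat). apply sq. exists c. ring. lia. }
          assert (cop : Nat.gcd m' p = 1%nat).
          { pose proof (Nat.gcd_divide_r m' p) as [c hc].
            assert (Hg : Nat.divide (Nat.gcd m' p) p) by apply Nat.gcd_divide_r.
            apply divide_nat_Z in Hg.
            destruct (prime_divisors _ pp _ Hg) as [h|[h|[h|h]]]; try lia.
            exfalso. apply npm'. assert (Nat.gcd m' p = p) by lia. rewrite <- H. apply Nat.gcd_divide_l. }
          rewrite Hrm by auto.
          assert (E3 : smoothb P m' = true).
          { apply smoothb_spec; auto. intros p' pp' dp'.
            assert (Nat.divide p' (m' * p)) by (apply Nat.divide_mul_l; auto).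
            specialize (E1 p' pp' H). destruct (Nat.eq_dec p' p) as [ee|ee]. subst p'. contradiction.
            unfold p in *. lia. }
          rewrite E3. split. right. ring. apply in_seq. split; auto. nia.
        - intros m m' hm hm' h1 h2 E. apply in_seq in hm. apply in_seq in hm'.
          assert (D : forall k, (1 <= k)%nat -> (if smoothb p k then (if smoothb P k then 0 else r k ^ 2) else 0) <> 0 -> Nat.divide p k).
          { intros k hk hne. destruct (smoothb p k) eqn:E1; [|lra]. destruct (smoothb P k) eqn:E2; [lra|].
            apply smoothb_spec in E1; [|lia].
            destruct (Nat.eq_dec (k mod p) 0) as [e|e]. apply Nat.Lcm0.mod_divide; auto. exfalso.
            apply Bool.not_true_iff_false in E2. apply E2. apply smoothb_spec; [lia|].
            intros p' pp' dp'. specialize (E1 p' pp' dp').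
            destruct (Nat.eq_dec p' p) as [ee|ee]. subst p'. exfalso. apply e. apply Nat.Lcm0.mod_divide; auto.
            unfold p in *. lia. }
          destruct (D m ltac:(lia) h1) as [c hc]. destruct (D m' ltac:(lia) h2) as [c' hc'].
          subst m m'. rewrite !Nat.div_mul in E by lia. subst. reflexivity. }
      specialize (IHP n). pose proof (pow2_ge_0 (r p)). pose proof (PP_ge1 P).
      assert (0 <= sumR (seq 1 n) (fun m => if smoothb P m then r m ^ 2 else 0)).
      { apply sumR_nonneg. intros. destruct (smoothb P x); [apply pow2_ge_0|lra]. }
      nra.
    + rewrite Rmult_1_r. eapply Rle_trans; [|apply (IHP n)]. right. apply sumR_ext. intros m hm.
      apply in_seq in hm.
      assert (smoothb (S P) m = smoothb P m).
      { destruct (smoothb P m) eqn:E1; destruct (smoothb (S P) m) eqn:E2; auto.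
        - apply smoothb_spec in E1; [|lia]. exfalso. apply Bool.not_true_iff_false in E2. apply E2.
          apply smoothb_spec; [lia|].
          intros p' pp' dp'. specialize (E1 p' pp' dp'). lia.
        - apply smoothb_spec in E2; [|lia]. exfalso. apply Bool.not_true_iff_false in E1. apply E1.
          apply smoothb_spec; [lia|].
          intros p' pp' dp'. specialize (E2 p' pp' dp'). destruct (Nat.eq_dec p' (S P)); [subst; contradiction|lia]. }
      rewrite H. reflexivity.
Qed.

Lemma sum_r2_le_L (B : R) (L : R) : Un_cv (prime_partial_prod r) L ->
  sumR (Nrange_le B) (fun m => r m ^ 2) <= L.
Proof.
  intros HL.
  set (T := Z.to_nat (up (Rabs B))).
  assert (HT : B <= INR T).
  { unfold T. destruct (archimed (Rabs B)) as [a _]. pose proof (Rle_abs B).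
    rewrite INR_IZR_INZ, Z2Nat.id. lra. pose proof (up_abs_pos B). lia. }
  rewrite (Nrange_pad B T _ HT).
  eapply Rle_trans; [|eapply Rle_trans; [apply (smooth_sum T T)|]].
  - apply sumR_le. intros m hm. apply in_seq in hm.
    assert (smoothb T m = true).
    { apply smoothb_spec; [lia|]. intros p pp dp. apply Nat.divide_pos_le in dp; lia. }
    rewrite H. destruct (Rleb _ _); [lra|apply pow2_ge_0].
  - apply growing_ineq; auto. intros n. rewrite PP_S. pose proof (PP_ge1 n).
    destruct (prime_dec _). pose proof (pow2_ge_0 (r (S n))). nra. lra.
Qed.
End Smooth.

Section MainSec.
Variables (q N : nat) (r : nat -> R) (g : Z) (Qn : nat).
Hypothesis HQ : (q = 2 * Qn + 1)%nat.
Hypothesis HQpos : (1 <= Qn)%nat.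
Hypothesis qprime : prime (Z.of_nat q).
Hypothesis P1 : forall i j : nat, (g ^ Z.of_nat i) mod Z.of_nat q = (g ^ Z.of_nat j) mod Z.of_nat q <->
   (i mod (2 * Qn) = j mod (2 * Qn))%nat.
Hypothesis P2 : forall n : Z, n mod Z.of_nat q <> 0%Z ->
   exists i, (i < 2 * Qn)%nat /\ (g ^ Z.of_nat i) mod Z.of_nat q = n mod Z.of_nat q.
Hypothesis P3 : (g ^ Z.of_nat Qn + 1) mod Z.of_nat q = 0%Z.
Hypothesis HN2 : (2 <= N)%nat.
Hypothesis Hx1 : 1 <= xpar q N.
Hypothesis HHx : Hpar q N * xpar q N = INR q / 2.
Hypothesis HH : INR N / 2 <= Hpar q N.
Hypothesis Hr : forall n, 0 <= r n.
Hypothesis Hmul : multiplicative r.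

Let lH := Zrange_abs_le (Hpar q N).
Let lx := Nrange_le (xpar q N).

Lemma hm_bound h m : In h lH -> In m lx ->
  h <> 0%Z /\ (1 <= m)%nat /\ (Z.abs (h * Z.of_nat m) <= Z.of_nat Qn)%Z.
Proof.
  intros hh hm. apply Zrange_in in hh. apply Nrange_in in hm. destruct hh as [h0 h1]. destruct hm as [m1 m2].
  split; auto. split; auto.
  assert (Rabs (IZR h) * INR m <= INR q / 2).
  { rewrite <- HHx. apply Rmult_le_compat; auto. apply Rabs_pos. apply pos_INR. }
  rewrite INR_IZR_INZ, <- Rabs_pos_eq with (x := IZR (Z.of_nat m)) in H by (apply IZR_le; lia).
  rewrite <- Rabs_mult, <- mult_IZR, <- abs_IZR, INR_IZR_INZ in H.
  assert (IZR (2 * Z.abs (h * Z.of_nat m)) <= IZR (Z.of_nat q)) by (rewrite mult_IZR; simpl (IZR 2); lra).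
  apply le_IZR in H0. lia.
Qed.

Lemma one_in_lx : In 1%nat lx.
Proof. apply Nrange_in. split; [auto|]. simpl. lra. Qed.
Lemma one_in_lH : In 1%Z lH.
Proof. apply Zrange_in. split. lia. rewrite Rabs_R1. apply (le_INR 2) in HN2. simpl in HN2. lra. Qed.

Lemma modnz z : z <> 0%Z -> (Z.abs z <= Z.of_nat Qn)%Z -> (z mod Z.of_nat q <> 0)%Z.
Proof.
  intros nz b E. apply Z.mod_divide in E; [|lia]. destruct E as [c hc]. subst z.
  assert (Eq : Z.of_nat q = (2 * Z.of_nat Qn + 1)%Z) by lia. rewrite Eq in *.
  destruct (Z.eq_dec c 0). subst; lia. assert (1 <= Z.abs c)%Z by lia. rewrite Z.abs_mul in b. nia.
Qed.

Definition theta (k : nat) (n : Z) : R := INR k * INR (ind q Qn g n) / INR (2 * Qn).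

Lemma cdiv_calc (cs sn h c : R) : h <> 0 ->
  Cmult (Cdiv (cs, sn) (RtoC h)) (RtoC c) = (c / h * cs, c / h * sn).
Proof.
  intros hh. unfold Cdiv, Cmult, Cinv, RtoC. simpl. f_equal; field; auto.
Qed.

Lemma S_eq k : Schi q N (chi q Qn g k) =
  (sumR lH (fun h => a N h * cos (2 * PI * theta k h)), sumR lH (fun h => a N h * sin (2 * PI * theta k h))).
Proof.
  apply injective_projections; simpl; unfold Schi; [rewrite sumC_fst|rewrite sumC_snd]; apply sumR_ext; intros h hh;
  destruct (hm_bound h 1 hh one_in_lx) as [h0 [_ hb]]; rewrite Z.mul_1_r in hb;
  pose proof (modnz h h0 hb) as hz;
  unfold chi; destruct (Z.eqb_spec (h mod Z.of_nat q) 0) as [e|_]; try contradiction;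
  unfold ecis; rewrite cdiv_calc by (apply not_0_IZR; auto); unfold a, theta; simpl; field; apply not_0_IZR; auto.
Qed.


Lemma aa_nonpos h1 h2 : h1 <> 0%Z -> h2 <> 0%Z -> (h1 * h2 < 0)%Z -> a N h1 * a N h2 <= 0.
Proof.
  intros n1 n2 p. unfold a.
  assert (IZR h1 * IZR h2 < 0) by (rewrite <- mult_IZR; apply IZR_lt; lia).
  pose proof (COS_bound (2 * PI * IZR h1 / INR N)) as [_ c1].
  pose proof (COS_bound (2 * PI * IZR h2 / INR N)) as [_ c2].
  replace ((1 - cos (2 * PI * IZR h1 / INR N)) / IZR h1 * ((1 - cos (2 * PI * IZR h2 / INR N)) / IZR h2))
    with ((1 - cos (2 * PI * IZR h1 / INR N)) * (1 - cos (2 * PI * IZR h2 / INR N)) * / (IZR h1 * IZR h2))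
    by (field; split; apply not_0_IZR; auto).
  assert (/ (IZR h1 * IZR h2) < 0) by (apply Rinv_lt_0_compat; lra).
  assert (0 <= (1 - cos (2 * PI * IZR h1 / INR N)) * (1 - cos (2 * PI * IZR h2 / INR N))) by nra.
  nra.
Qed.

Definition nP (p : Z * nat) : Z := (fst p * Z.of_nat (snd p))%Z.
Definition wP (p : Z * nat) : R := a N (fst p) * r (snd p).

Definition Tsum : R := sumR (list_prod lH lx) (fun i => sumR (list_prod lH lx) (fun j =>
  if Z.eq_dec (nP i) (nP j) then wP i * wP j else 0)).

Lemma CORE (M : R) : 0 <= M ->
  (forall chi : Z -> C, dirichlet_char (Z.of_nat q) chi ->
       non_principal (Z.of_nat q) chi -> (Cmod (Schi q N chi)) ^ 2 <= M) ->
  Tsum <= M * sumR lx (fun m => r m ^ 2).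
Proof.
  intros HM Hb.
  pose proof (pos_INR Qn) as Q0. assert (Qp : 0 < INR Qn) by (apply lt_0_INR; lia).
  set (XS := fun k => sumR lH (fun h => a N h * cos (2 * PI * theta k h))).
  set (YS := fun k => sumR lH (fun h => a N h * sin (2 * PI * theta k h))).
  set (XR := fun k => sumR lx (fun m => r m * cos (2 * PI * (INR k * INR (ind q Qn g (Z.of_nat m)) / INR (2 * Qn))))).
  set (YR := fun k => sumR lx (fun m => r m * sin (2 * PI * (INR k * INR (ind q Qn g (Z.of_nat m)) / INR (2 * Qn))))).
  set (DP := fun p : Z * nat => (ind q Qn g (fst p) + ind q Qn g (Z.of_nat (snd p)))%nat).
  set (XP := fun k => sumR (list_prod lH lx) (fun p => wP p * cos (2 * PI * (INR k * INR (DP p) / INR (2 * Qn))))).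
  set (YP := fun k => sumR (list_prod lH lx) (fun p => wP p * sin (2 * PI * (INR k * INR (DP p) / INR (2 * Qn))))).
  assert (HQn : INR (2 * Qn) <> 0) by (apply not_0_INR; lia).
  assert (Eprod : forall k, XP k ^ 2 + YP k ^ 2 = (XS k ^ 2 + YS k ^ 2) * (XR k ^ 2 + YR k ^ 2)).
  { intros k.
    assert (E1 : XP k = XS k * XR k - YS k * YR k).
    { unfold XP, XS, XR, YS, YR. rewrite !sumR_mult, <- sumR_minus, sumR_prod. apply sumR_ext. intros h _.
      rewrite <- sumR_minus. apply sumR_ext. intros m _. unfold wP, DP, theta. simpl fst. simpl snd.
      rewrite plus_INR. replace (2 * PI * (INR k * (INR (ind q Qn g h) + INR (ind q Qn g (Z.of_nat m))) / INR (2 * Qn)))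
        with (2 * PI * (INR k * INR (ind q Qn g h) / INR (2 * Qn)) + 2 * PI * (INR k * INR (ind q Qn g (Z.of_nat m)) / INR (2 * Qn)))
        by (field; auto).
      rewrite cos_plus. ring. }
    assert (E2 : YP k = YS k * XR k + XS k * YR k).
    { unfold YP, XS, XR, YS, YR. rewrite !sumR_mult, <- sumR_plus, sumR_prod. apply sumR_ext. intros h _.
      rewrite <- sumR_plus. apply sumR_ext. intros m _. unfold wP, DP, theta. simpl fst. simpl snd.
      rewrite plus_INR. replace (2 * PI * (INR k * (INR (ind q Qn g h) + INR (ind q Qn g (Z.of_nat m))) / INR (2 * Qn)))
        with (2 * PI * (INR k * INR (ind q Qn g h) / INR (2 * Qn)) + 2 * PI * (INR k * INR (ind q Qn g (Z.of_nat m)) / INR (2 * Qn)))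
        by (field; auto).
      rewrite sin_plus. ring. }
    rewrite E1, E2. ring. }
  assert (Sbound : forall k, In k (ks Qn) -> XS k ^ 2 + YS k ^ 2 <= M).
  { intros k hk. assert (Nat.odd k = true).
    { unfold ks in hk. apply in_map_iff in hk. destruct hk as [j [<- _]].
      apply Nat.odd_spec. exists j. reflexivity. }
    pose proof (Hb _ (chi_dirichlet q Qn g HQ HQpos qprime P1 P2 k) (chi_nonprincipal q Qn g HQ HQpos qprime P1 P2 P3 k H)) as B.
    rewrite S_eq, Cmod_sq in B. simpl in B. exact B. }
  assert (Rnn : forall k, 0 <= XR k ^ 2 + YR k ^ 2).
  { intros. pose proof (pow2_ge_0 (XR k)). pose proof (pow2_ge_0 (YR k)). lra. }
  assert (Main1 : sumR (ks Qn) (fun k => XP k ^ 2 + YP k ^ 2) <= M * sumR (ks Qn) (fun k => XR k ^ 2 + YR k ^ 2)).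
  { rewrite <- sumR_scal. apply sumR_le. intros k hk. rewrite Eprod.
    apply Rmult_le_compat_r; auto. }
  assert (O1 : sumR (ks Qn) (fun k => XP k ^ 2 + YP k ^ 2) =
     sumR (list_prod lH lx) (fun i => sumR (list_prod lH lx) (fun j => wP i * wP j *
     ((if Z.eq_dec (nP i) (nP j) then INR Qn else 0) - (if Z.eq_dec (nP i) (- nP j)%Z then INR Qn else 0))))).
  { unfold XP, YP. apply (ORTHSUM q Qn g HQ HQpos qprime P1 P2 P3).
    intros [h m] hp. apply in_prod_iff in hp. destruct hp as [hh hm].
    destruct (hm_bound h m hh hm) as [h0 [m1 hb]].
    unfold nP, DP. simpl. split; [nia|split; auto].
    destruct (hm_bound h 1 hh one_in_lx) as [_ [_ hb1]]. rewrite Z.mul_1_r in hb1.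
    destruct (hm_bound 1 m one_in_lH hm) as [_ [_ hb2]]. rewrite Z.mul_1_l in hb2.
    destruct (ind_spec q Qn g HQ HQpos P2 h (modnz h h0 hb1)) as [_ i1].
    destruct (ind_spec q Qn g HQ HQpos P2 (Z.of_nat m) (modnz (Z.of_nat m) ltac:(lia) hb2)) as [_ i2].
    rewrite Nat2Z.inj_add, Z.pow_add_r by lia.
    rewrite Z.mul_mod, i1, i2, <- Z.mul_mod by lia. reflexivity. }
  assert (O2 : sumR (ks Qn) (fun k => XR k ^ 2 + YR k ^ 2) =
     sumR lx (fun i => sumR lx (fun j => r i * r j *
     ((if Z.eq_dec (Z.of_nat i) (Z.of_nat j) then INR Qn else 0) - (if Z.eq_dec (Z.of_nat i) (- Z.of_nat j)%Z then INR Qn else 0))))).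
  { unfold XR, YR. apply (ORTHSUM q Qn g HQ HQpos qprime P1 P2 P3 lx r (fun m => ind q Qn g (Z.of_nat m)) (fun m => Z.of_nat m)).
    intros m hm. destruct (hm_bound 1 m one_in_lH hm) as [_ [m1 hb2]]. rewrite Z.mul_1_l in hb2.
    split; [lia|split; auto].
    destruct (ind_spec q Qn g HQ HQpos P2 (Z.of_nat m) (modnz (Z.of_nat m) ltac:(lia) hb2)) as [_ i2]. exact i2. }
  assert (L1 : INR Qn * Tsum <= sumR (ks Qn) (fun k => XP k ^ 2 + YP k ^ 2)).
  { rewrite O1. unfold Tsum. rewrite <- sumR_scal. apply sumR_le. intros i hi. rewrite <- sumR_scal.
    apply sumR_le. intros j hj.
    destruct i as [h m]; destruct j as [h' m']. apply in_prod_iff in hi. apply in_prod_iff in hj.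
    destruct (hm_bound h m (proj1 hi) (proj2 hi)) as [h0 [m1 _]].
    destruct (hm_bound h' m' (proj1 hj) (proj2 hj)) as [h0' [m1' _]].
    unfold nP, wP. simpl fst. simpl snd.
    destruct (Z.eq_dec (h * Z.of_nat m) (h' * Z.of_nat m')) as [e|e];
    destruct (Z.eq_dec (h * Z.of_nat m) (- (h' * Z.of_nat m'))%Z) as [e'|e'].
    - exfalso. nia.
    - lra.
    - assert (a N h * a N h' <= 0) by (apply aa_nonpos; auto; nia).
      assert (0 <= r m * r m') by (apply Rmult_le_pos; auto).
      assert (a N h * r m * (a N h' * r m') <= 0).
      { replace (a N h * r m * (a N h' * r m')) with ((a N h * a N h') * (r m * r m')) by ring.
        apply Rmult_le_0_r; auto. }
      nra.
    - lra. }
  assert (U1 : sumR (ks Qn) (fun k => XR k ^ 2 + YR k ^ 2) <= INR Qn * sumR lx (fun m => r m ^ 2)).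
  { rewrite O2. rewrite <- sumR_scal. apply sumR_le. intros i hi.
    apply Rle_trans with (INR Qn * sumR lx (fun j => if Z.eq_dec (Z.of_nat i) (Z.of_nat j) then r i * r j else 0)).
    - rewrite <- sumR_scal. apply sumR_le. intros j hj.
      assert (0 <= r i * r j) by (apply Rmult_le_pos; auto).
      destruct (Z.eq_dec _ _); destruct (Z.eq_dec _ _); nra.
    - apply Rmult_le_compat_l; auto.
      apply Rle_trans with (sumR [i] (fun j => r i * r j)).
      + apply (sumR_inj Nat.eq_dec _ _ _ _ (fun _ => i)).
        * apply Nrange_nodup.
        * intros j _. destruct (Z.eq_dec _ _); [apply Rmult_le_pos; auto|lra].
        * intros b _. apply Rmult_le_pos; auto.
        * intros j _ hne. destruct (Z.eq_dec _ _) as [e|e]; [|lra]. apply Nat2Z.inj in e. subst. split; [lra|simpl; auto].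
        * intros j j' _ _ h1 h2 _. destruct (Z.eq_dec (Z.of_nat i) (Z.of_nat j)) as [e|e]; [|lra].
          destruct (Z.eq_dec (Z.of_nat i) (Z.of_nat j')) as [e'|e']; [|lra]. lia.
      + rewrite sumR_cons, sumR_nil. right. ring. }
  assert (INR Qn * Tsum <= INR Qn * (M * sumR lx (fun m => r m ^ 2))).
  { eapply Rle_trans; [exact L1|]. eapply Rle_trans; [exact Main1|].
    replace (INR Qn * (M * sumR lx (fun m => r m ^ 2))) with (M * (INR Qn * sumR lx (fun m => r m ^ 2))) by ring.
    apply Rmult_le_compat_l; auto. }
  apply Rmult_le_reg_l with (INR Qn); auto.
Qed.

Lemma T_rearr : Tsum = sumR (list_prod lx lx) (fun p => r (fst p) * r (snd p) * Icore q N (fst p) (snd p)).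
Proof.
  unfold Tsum. rewrite sumR_prod, sumR_prod.
  rewrite (sumR_ext lH _ (fun h1 => sumR lx (fun m1 => sumR lx (fun m2 => sumR lH (fun h2 =>
     if Z.eq_dec (h1 * Z.of_nat m1) (h2 * Z.of_nat m2) then a N h1 * r m1 * (a N h2 * r m2) else 0))))).
  2: { intros h1 _. apply sumR_ext. intros m1 _. rewrite sumR_prod. rewrite sumR_swap. reflexivity. }
  rewrite sumR_swap. apply sumR_ext. intros m1 _. rewrite sumR_swap. apply sumR_ext. intros m2 _.
  unfold Icore. simpl fst. simpl snd. rewrite <- sumR_scal. apply sumR_ext. intros h1 _.
  rewrite <- sumR_scal. apply sumR_ext. intros h2 _.
  destruct (Z.eq_dec _ _); ring.
Qed.

End MainSec.

Lemma RHS_zero q N r : Rmin (xpar q N) (INR N / 2) < 1 -> RHS_sum q N r = 0.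
Proof.
  intros hB. unfold RHS_sum. cbv zeta.
  rewrite (sumR_ext _ _ (fun _ => 0)). apply sumR_zero.
  intros u hu. apply Nrange_in in hu. destruct hu as [h1 h2]. apply (le_INR 1) in h1. simpl in h1. lra.
Qed.

Theorem mainTheorem8 :
  exists c : R, 0 < c /\
  forall (q N : nat) (r : nat -> R),
    is_prime_nat q ->
    (1 <= N)%nat ->
    INR N <= INR q / (ln (INR q)) ^ 2 ->
    (forall n, 0 <= r n) ->
    multiplicative r ->
    (forall n, (1 <= n)%nat -> (~ squarefree n \/ Nat.divide q n) -> r n = 0) ->
    forall L : R, Un_cv (prime_partial_prod r) L ->
    forall M : R, 0 <= M ->
    (forall chi : Z -> C, dirichlet_char (Z.of_nat q) chi ->
       non_principal (Z.of_nat q) chi -> (Cmod (Schi q N chi)) ^ 2 <= M) ->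
    c * (/ INR N * RHS_sum q N r / L) <= M.
Proof.
  exists (1 / 48). split; [lra|].
  intros q N r Hq HN1 HNq Hr Hmul Hsq L HL M HM Hb.
  unfold is_prime_nat in Hq.
  assert (NR : 1 <= INR N) by (apply (le_INR 1); auto).
  assert (L1 : 1 <= L).
  { apply Rle_trans with (prime_partial_prod r 0). apply PP_ge1.
    apply growing_ineq; auto. intros n. rewrite PP_S. pose proof (PP_ge1 r n).
    destruct (prime_dec _). pose proof (pow2_ge_0 (r (S n))). nra. lra. }
  destruct (Rlt_le_dec (Rmin (xpar q N) (INR N / 2)) 1) as [hB|hB].
  { rewrite RHS_zero by auto. unfold Rdiv. rewrite Rmult_0_r, Rmult_0_l, Rmult_0_r. lra. }
  assert (Hx1 : 1 <= xpar q N) by (eapply Rle_trans; [exact hB|apply Rmin_l]).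
  assert (HN2R : 2 <= INR N) by (pose proof (Rmin_r (xpar q N) (INR N / 2)); lra).
  assert (HN2 : (2 <= N)%nat) by (apply INR_le; simpl; lra).
  assert (q2 : (2 <= q)%nat) by (pose proof (prime_ge_2 _ Hq); lia).
  assert (qR : 2 <= INR q) by (apply (le_INR 2) in q2; simpl in q2; lra).
  assert (ln2 : / 2 < ln 2) by apply ln_lt_2.
  assert (lnq : ln 2 <= ln (INR q)) by (apply Rcomplements.ln_le; lra).
  assert (qn2 : q <> 2%nat).
  { intros e. subst q. revert Hx1. unfold xpar. change (INR 2) with 2.
    assert (sqrt (2 / INR N) <= 1).
    { rewrite <- sqrt_1. apply sqrt_le_1_alt. apply Rmult_le_reg_r with (INR N). lra.
      unfold Rdiv. rewrite Rmult_assoc, Rinv_l by lra. lra. }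
    assert (0 <= sqrt (2 / INR N)) by apply sqrt_pos.
    assert (/ (2 * ln 2) < 1).
    { rewrite <- Rinv_1. apply Rinv_lt_contravar; lra. }
    assert (0 < / (2 * ln 2)) by (apply Rinv_0_lt_compat; lra).
    intros hx. assert (/ (2 * ln 2) * sqrt (2 / INR N) <= / (2 * ln 2) * 1) by (apply Rmult_le_compat_l; lra).
    lra. }
  destruct (Nat.Even_or_Odd q) as [[k hk]|[Qn hQn]].
  { exfalso. assert (D : (2 | Z.of_nat q)%Z) by (exists (Z.of_nat k); lia).
    destruct (prime_divisors _ Hq _ D) as [h|[h|[h|h]]]; lia. }
  assert (HQpos : (1 <= Qn)%nat) by lia.
  destruct (@PRM.prim_root_std q Hq) as [gn [P1n [P2n P3n]]].
  set (g := Z.of_nat gn).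
  assert (q1 : (q - 1 = 2 * Qn)%nat) by lia.
  assert (Pw : forall i, ((g ^ Z.of_nat i) mod Z.of_nat q = Z.of_nat (Nat.modulo (gn ^ i) q))%Z).
  { intros i. unfold g. rewrite Nat2Z.inj_mod, Nat2Z.inj_pow. reflexivity. }
  assert (P1 : forall i j : nat, (g ^ Z.of_nat i) mod Z.of_nat q = (g ^ Z.of_nat j) mod Z.of_nat q <->
     (i mod (2 * Qn) = j mod (2 * Qn))%nat).
  { intros i j. rewrite !Pw, <- q1, <- P1n. split; intros h; [apply Nat2Z.inj in h|rewrite h]; auto. }
  assert (P2 : forall n : Z, n mod Z.of_nat q <> 0%Z ->
     exists i, (i < 2 * Qn)%nat /\ (g ^ Z.of_nat i) mod Z.of_nat q = n mod Z.of_nat q).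
  { intros n hn. set (a := Z.to_nat (n mod Z.of_nat q)).
    assert (ha : Z.of_nat a = (n mod Z.of_nat q)%Z) by (unfold a; rewrite Z2Nat.id; [auto|apply Z.mod_pos_bound; lia]).
    assert (ham : (a mod q = a)%nat).
    { apply Nat.mod_small. apply Nat2Z.inj_lt. rewrite ha. apply Z.mod_pos_bound. lia. }
    destruct (P2n a ltac:(rewrite ham; lia)) as [i [hi ei]].
    exists i. split; [lia|]. rewrite Pw, ei, ham. auto. }
  assert (P3 : (g ^ Z.of_nat Qn + 1) mod Z.of_nat q = 0%Z).
  { assert (hd : ((q - 1) / 2 = Qn)%nat) by (rewrite q1, Nat.mul_comm, Nat.div_mul; lia).
    assert (od : Nat.odd q = true) by (apply Nat.odd_spec; exists Qn; lia).
    pose proof (P3n od) as h. rewrite hd in h.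
    unfold g. rewrite <- Nat2Z.inj_pow. change 1%Z with (Z.of_nat 1). rewrite <- Nat2Z.inj_add, <- Nat2Z.inj_mod, h.
    reflexivity. }
  assert (lnpos : 0 < ln (INR q)) by lra.
  assert (HHx : Hpar q N * xpar q N = INR q / 2).
  { unfold Hpar, xpar.
    replace (sqrt (INR N * INR q) * ln (INR q) * (/ (2 * ln (INR q)) * sqrt (INR q / INR N)))
      with (sqrt (INR N * INR q) * sqrt (INR q / INR N) / 2) by (field; lra).
    rewrite <- sqrt_mult_alt by nra.
    replace (INR N * INR q * (INR q / INR N)) with (INR q * INR q) by (field; lra).
    rewrite sqrt_square by lra. reflexivity. }
  assert (HH : INR N / 2 <= Hpar q N).
  { unfold Hpar.
    assert (E : sqrt (INR N * INR q) = INR N * sqrt (INR q / INR N)).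
    { replace (INR N * INR q) with ((INR N * INR N) * (INR q / INR N)) by (field; lra).
      rewrite sqrt_mult_alt by nra. rewrite sqrt_square by lra. reflexivity. }
    rewrite E.
    assert (sx : 2 * ln (INR q) <= sqrt (INR q / INR N)).
    { unfold xpar in Hx1. apply Rmult_le_reg_l with (/ (2 * ln (INR q))).
      apply Rinv_0_lt_compat; lra. rewrite Rinv_l by lra. lra. }
    assert (INR N * (2 * ln (INR q)) * ln (INR q) <= INR N * sqrt (INR q / INR N) * ln (INR q)).
    { apply Rmult_le_compat_r; [lra|]. apply Rmult_le_compat_l; lra. }
    assert (l2 : / 4 <= ln (INR q) * ln (INR q)) by nra.
    assert (INR N / 2 <= INR N * (2 * ln (INR q)) * ln (INR q)).
    { replace (INR N * (2 * ln (INR q)) * ln (INR q)) with (2 * INR N * (ln (INR q) * ln (INR q))) by ring.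
      apply Rle_trans with (2 * INR N * / 4). lra. apply Rmult_le_compat_l; lra. }
    lra. }
  assert (Hsq' : forall n, (1 <= n)%nat -> ~ squarefree n -> r n = 0) by (intros; apply Hsq; auto).
  pose proof (CORE q N r g Qn hQn HQpos Hq P1 P2 P3 HN2 Hx1 HHx HH Hr M HM Hb) as Core.
  rewrite T_rearr in Core.
  set (T0 := Z.to_nat (up (Rabs (xpar q N)))).
  assert (HT : xpar q N <= INR T0).
  { unfold T0. destruct (archimed (Rabs (xpar q N))) as [aa _]. pose proof (Rle_abs (xpar q N)).
    rewrite INR_IZR_INZ, Z2Nat.id. lra. pose proof (up_abs_pos (xpar q N)). lia. }
  pose proof (RHS_bound q N r HN2 HH Hr Hmul T0 HT) as RB.
  pose proof (sum_r2_le_L r Hmul Hsq' (xpar q N) L HL) as SL.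
  assert (RHS_sum q N r / (48 * INR N) <= M * L).
  { eapply Rle_trans; [exact RB|]. eapply Rle_trans; [exact Core|]. apply Rmult_le_compat_l; auto. }
  replace (1 / 48 * (/ INR N * RHS_sum q N r / L)) with (RHS_sum q N r / (48 * INR N) / L) by (field; lra).
  apply Rmult_le_reg_r with L. lra. unfold Rdiv at 1. rewrite Rmult_assoc, Rinv_l by lra. lra.
Qed.
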